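(* Consider the $K$-armed stochastic bandit problem described in the context, with rewards in $[0,1]$, and let the agent use the following UCB policy: for $t=1,\dots,K$ play arm $t$; for $t\ge K+1$ play an arm maximizing \[\frac{S_a(t-1)}{N_a(t-1)}+\sqrt{\frac{\log(t)+3\log\log(t)}{2N_a(t-1)}}\] (ties broken arbitrarily). Let $a^*$ be an optimal arm and $a$ an arm with $\mu_a<\mu_{a^*}$. Then for every $\epsilon>0$ there exist a constant $C_1>0$ and positive numbers $C_2(\epsilon),\beta(\epsilon)$ such that for every integer $n\ge3$, \[\mathbb{E}[N_n(a)] \leq \frac{\log(n)}{2(\mu_a-\mu_{a^*})^2}(1+\epsilon) + C_1\log(\log(n)) + \frac{C_2(\epsilon)}{n^{\beta(\epsilon)}}\;.\]
   Context: Bandit setting: there are $K\ge 2$ arms. For each arm $a\in\{1,\dots,K\}$, $(X_{a,s})_{s\ge1}$ is an i.i.d. sequence of rewards taking values in $[0,1]$ with mean $\mu_a$; the sequences for different arms are independent. At each time $t$ a policy chooses an arm $A_t$ based on past choices and observed rewards, and receives $X_t=X_{A_t,N_{A_t}(t)}$, where $N_a(t)=\sum_{s=1}^t \mathbb{1}\{A_s=a\}$ (also written $N_n(a)$ for $t=n$), and $S_a(t)=\sum_{s\le t}\mathbb{1}\{A_s=a\}X_s$. $\mu_{a^*}=\max_a\mu_a$ and $a^*$ is any arm attaining it. *)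

(* Defs.v *)
From Stdlib Require Import Reals Lra List.
Import ListNotations.
Open Scope R_scope.

Record prob_space (Omega : Type) (F : (Omega -> Prop) -> Prop)
  (P : (Omega -> Prop) -> R) : Prop := {
  ps_full : F (fun _ => True);
  ps_compl : forall E, F E -> F (fun w => ~ E w);
  ps_union : forall E : nat -> Omega -> Prop,
      (forall n, F (E n)) -> F (fun w => exists n, E n w);
  ps_nonneg : forall E, F E -> 0 <= P E;
  ps_total : P (fun _ => True) = 1;
  ps_additive : forall E : nat -> Omega -> Prop,
      (forall n, F (E n)) ->
      (forall m n w, m <> n -> E m w -> E n w -> False) ->
      infinite_sum (fun n => P (E n)) (P (fun w => exists n, E n w))
}.

Definition measurable_rv {Omega} (F : (Omega -> Prop) -> Prop) (Y : Omega -> R) :=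
  forall c : R, F (fun w => Y w <= c).

Definition indep_family {Omega I} (P : (Omega -> Prop) -> R)
  (D : I -> Prop) (Y : I -> Omega -> R) : Prop :=
  forall (l : list I) (c : I -> R), NoDup l -> Forall D l ->
    P (fun w => Forall (fun i => Y i w <= c i) l)
    = fold_right Rmult 1 (map (fun i => P (fun w => Y i w <= c i)) l).

Definition same_law {Omega} (P : (Omega -> Prop) -> R) (Y Z : Omega -> R) :=
  forall c, P (fun w => Y w <= c) = P (fun w => Z w <= c).

(* Expectation of a random variable Y with values in [0,1]:
   limit of the expectations of the simple lower approximations
   floor(m Y)/m (m = M+1). *)
Definition is_mean01 {Omega} (P : (Omega -> Prop) -> R) (Y : Omega -> R) (mu : R) :=
  Un_cv (fun M => sum_f_R0 (fun k => INR k / INR (S M) *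
           P (fun w => INR k <= INR (S M) * Y w < INR (S k))) (S M)) mu.

Definition expect_nat {Omega} (P : (Omega -> Prop) -> R) (n : nat) (Y : Omega -> nat) : R :=
  sum_f_R0 (fun k => INR k * P (fun w => Y w = k)) n.

(* ---------- Bandit quantities ----------
   Arms are 1..K. X b s w = s-th reward of arm b (s >= 1).
   A t w = arm played at time t (t >= 1). *)

Fixpoint Npulls {Omega} (A : nat -> Omega -> nat) (b : nat) (t : nat) (w : Omega) : nat :=
  match t with
  | O => O
  | S t' => (Npulls A b t' w + (if Nat.eqb (A (S t') w) b then 1 else 0))%nat
  end.

Definition Xobs {Omega} (X : nat -> nat -> Omega -> R) (A : nat -> Omega -> nat)
  (t : nat) (w : Omega) : R :=
  X (A t w) (Npulls A (A t w) t w) w.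

Fixpoint Ssum {Omega} (X : nat -> nat -> Omega -> R) (A : nat -> Omega -> nat)
  (b : nat) (t : nat) (w : Omega) : R :=
  match t with
  | O => 0
  | S t' => Ssum X A b t' w + (if Nat.eqb (A (S t') w) b then Xobs X A (S t') w else 0)
  end.

Definition ucb_index {Omega} (X : nat -> nat -> Omega -> R) (A : nat -> Omega -> nat)
  (b : nat) (t : nat) (w : Omega) : R :=
  Ssum X A b (t - 1) w / INR (Npulls A b (t - 1) w)
  + sqrt ((ln (INR t) + 3 * ln (ln (INR t))) / (2 * INR (Npulls A b (t - 1) w))).

Definition is_ucb_policy {Omega} (K : nat) (X : nat -> nat -> Omega -> R)
  (A : nat -> Omega -> nat) : Prop :=
  (forall t w, (1 <= t <= K)%nat -> A t w = t) /\
  (forall t w, (K + 1 <= t)%nat ->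
     (1 <= A t w <= K)%nat /\
     forall b, (1 <= b <= K)%nat -> ucb_index X A b t w <= ucb_index X A (A t w) t w).

(* Main.v *)
Require Import Defs.
From Stdlib Require Import Reals Lra Lia List Arith Classical ClassicalEpsilon FunctionalExtensionality PropExtensionality Permutation.
Open Scope R_scope.


Lemma Pext {Omega} (P : (Omega -> Prop) -> R) (E E' : Omega -> Prop) :
  (forall w, E w <-> E' w) -> P E = P E'.
Proof.
  intros H. f_equal. apply functional_extensionality. intros w.
  apply propositional_extensionality. apply H.
Qed.

Lemma Fext {Omega} (F : (Omega -> Prop) -> Prop) (E E' : Omega -> Prop) :
  (forall w, E w <-> E' w) -> F E -> F E'.
Proof.
  intros H HE. replace E' with E; auto. apply functional_extensionality. intros w.
  apply propositional_extensionality. apply H.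
Qed.


Lemma F_false {Omega F P} (HP : @prob_space Omega F P) : F (fun _ => False).
Proof.
  apply (Fext F (fun w => ~ True)). { intros; tauto. }
  apply (ps_compl _ _ _ HP). apply (ps_full _ _ _ HP).
Qed.

Lemma F_true {Omega F P} (HP : @prob_space Omega F P) : F (fun _ => True).
Proof. apply (ps_full _ _ _ HP). Qed.

Lemma F_not {Omega F P} (HP : @prob_space Omega F P) E : F E -> F (fun w => ~ E w).
Proof. apply (ps_compl _ _ _ HP). Qed.

Lemma F_or {Omega F P} (HP : @prob_space Omega F P) A B :
  F A -> F B -> F (fun w => A w \/ B w).
Proof.
  intros HA HB.
  apply (Fext F (fun w => exists n, (match n with O => A | _ => B end) w)).
  { intros w; split. intros [[|n] H]; auto. intros [H|H]. exists O; auto. exists 1%nat; auto. }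
  apply (ps_union _ _ _ HP). intros [|n]; auto.
Qed.

Lemma F_and {Omega F P} (HP : @prob_space Omega F P) A B :
  F A -> F B -> F (fun w => A w /\ B w).
Proof.
  intros HA HB.
  apply (Fext F (fun w => ~ ((~ A w) \/ (~ B w)))).
  { intros w; tauto. }
  apply (F_not HP); auto. apply (F_or HP); auto; apply (F_not HP); auto.
Qed.

Lemma F_exists {Omega F P} (HP : @prob_space Omega F P) (A : nat -> Omega -> Prop) :
  (forall n, F (A n)) -> F (fun w => exists n, A n w).
Proof. apply (ps_union _ _ _ HP). Qed.

Lemma F_exists_le {Omega F P} (HP : @prob_space Omega F P) (A : nat -> Omega -> Prop) N :
  (forall n, (n <= N)%nat -> F (A n)) -> F (fun w => exists n, (n <= N)%nat /\ A n w).
Proof.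
  intros H. apply (F_exists HP); auto. intros n.
  destruct (le_lt_dec n N) as [h|h].
  - apply (Fext F (A n)). intros; tauto. auto.
  - apply (Fext F (fun _ => False)). intros; split; [tauto|]. intros [h' _]; lia.
    apply (F_false HP).
Qed.

Lemma F_iff {Omega F P} (HP : @prob_space Omega F P) A B :
  F A -> F B -> F (fun w => A w <-> B w).
Proof.
  intros. apply (Fext F (fun w => (A w /\ B w) \/ (~ A w /\ ~ B w))).
  intros; tauto. apply (F_or HP); auto; apply (F_and HP); auto; apply (F_not HP); auto.
Qed.

Lemma P_false {Omega F P} (HP : @prob_space Omega F P) : P (fun _ => False) = 0.
Proof.
  pose proof (ps_additive _ _ _ HP (fun _ _ => False)) as H.
  assert (H1 : infinite_sum (fun _ => P (fun _ => False)) (P (fun w => exists n : nat, False))).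
  { apply H. intros; apply (F_false HP). intros; tauto. }
  rewrite (Pext P (fun w => exists n : nat, False) (fun _ => False)) in H1.
  2:{ intros w; split. intros [_ h]; auto. tauto. }
  set (x := P (fun _ => False)) in *.
  assert (Hx : 0 <= x) by (apply (ps_nonneg _ _ _ HP); apply (F_false HP)).
  destruct (Req_dec x 0) as [e|ne]; auto.
  assert (xp : 0 < x) by lra.
  destruct (H1 (x/2)) as [N HN]; [lra|].
  specialize (HN (S N) ltac:(lia)).
  assert (forall n, sum_f_R0 (fun _ => x) n = INR (S n) * x).
  { induction n; simpl sum_f_R0. simpl; lra. rewrite IHn. rewrite (S_INR (S n)). lra. }
  rewrite H0 in HN. unfold R_dist in HN. rewrite S_INR, S_INR in HN.
  assert (0 <= INR N) by apply pos_INR.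
  rewrite Rabs_right in HN by nra. nra.
Qed.

Lemma P_nonneg {Omega F P} (HP : @prob_space Omega F P) E : F E -> 0 <= P E.
Proof. apply (ps_nonneg _ _ _ HP). Qed.

Lemma P_add {Omega F P} (HP : @prob_space Omega F P) A B :
  F A -> F B -> (forall w, A w -> B w -> False) ->
  P (fun w => A w \/ B w) = P A + P B.
Proof.
  intros HA HB Hd.
  set (E := fun n : nat => match n with O => A | 1%nat => B | _ => fun _ => False end).
  assert (H1 : infinite_sum (fun n => P (E n)) (P (fun w => exists n, E n w))).
  { apply (ps_additive _ _ _ HP).
    - intros [|[|n]]; simpl; auto. apply (F_false HP).
    - intros [|[|m]] [|[|n]] w hmn; simpl; try tauto; try lia; eauto. }
  rewrite (Pext P _ (fun w => A w \/ B w)) in H1.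
  2:{ intros w; split. intros [[|[|n]] h]; simpl in h; tauto.
      intros [h|h]. exists O; auto. exists 1%nat; auto. }
  apply (uniqueness_sum (fun n => P (E n))); auto.
  intros eps Heps. exists 1%nat. intros n Hn.
  assert (forall n, (1 <= n)%nat -> sum_f_R0 (fun n => P (E n)) n = P A + P B).
  { induction n0; intros h. lia. destruct n0. simpl. auto.
    simpl sum_f_R0 in *. rewrite IHn0 by lia. simpl. rewrite (P_false HP). lra. }
  rewrite H by auto. unfold R_dist. rewrite Rminus_diag, Rabs_R0; auto.
Qed.

Lemma P_total {Omega F P} (HP : @prob_space Omega F P) : P (fun _ => True) = 1.
Proof. apply (ps_total _ _ _ HP). Qed.

Lemma P_split {Omega F P} (HP : @prob_space Omega F P) A B :
  F A -> F B -> P A = P (fun w => A w /\ B w) + P (fun w => A w /\ ~ B w).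
Proof.
  intros. rewrite <- (P_add HP); auto.
  apply Pext. intros w. destruct (classic (B w)); tauto.
  apply (F_and HP); auto. apply (F_and HP); auto. apply (F_not HP); auto. intros w; tauto.
Qed.

Lemma P_mono {Omega F P} (HP : @prob_space Omega F P) A B :
  F A -> F B -> (forall w, A w -> B w) -> P A <= P B.
Proof.
  intros HA HB H. rewrite (P_split HP B A); auto.
  rewrite (Pext P (fun w => B w /\ A w) A) by (intros w; split; [tauto|auto]).
  assert (0 <= P (fun w => B w /\ ~ A w)). apply (P_nonneg HP); auto. apply (F_and HP); auto. apply (F_not HP); auto.
  lra.
Qed.

Lemma P_le1 {Omega F P} (HP : @prob_space Omega F P) A : F A -> P A <= 1.
Proof.
  intros. rewrite <- (P_total HP). apply (P_mono HP); auto. apply (F_true HP).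
Qed.

Lemma P_or_le {Omega F P} (HP : @prob_space Omega F P) A B :
  F A -> F B -> P (fun w => A w \/ B w) <= P A + P B.
Proof.
  intros HA HB.
  rewrite (Pext P _ (fun w => A w \/ (B w /\ ~ A w))).
  2:{ intros w; tauto. }
  rewrite (P_add HP); auto. 2:{ apply (F_and HP); auto; apply (F_not HP); auto. }
  2:{ intros; tauto. }
  assert (P (fun w => B w /\ ~ A w) <= P B). apply (P_mono HP); auto.
  apply (F_and HP); auto; apply (F_not HP); auto. intros; tauto. lra.
Qed.

Lemma P_union_bound {Omega F P} (HP : @prob_space Omega F P) (A : nat -> Omega -> Prop) N :
  (forall n, F (A n)) ->
  P (fun w => exists n, (n <= N)%nat /\ A n w) <= sum_f_R0 (fun n => P (A n)) N.
Proof.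
  intros HA. induction N.
  - simpl. right. apply Pext. intros w; split. intros [n [h1 h2]]. replace n with O in h2 by lia; auto.
    intros h. exists O; auto.
  - simpl. rewrite (Pext P _ (fun w => (exists n, (n <= N)%nat /\ A n w) \/ A (S N) w)).
    2:{ intros w; split. intros [n [h1 h2]]. destruct (Nat.eq_dec n (S N)). subst; auto.
        left; exists n; split; auto; lia.
        intros [[n [h1 h2]]|h]. exists n; split; auto. exists (S N); auto. }
    eapply Rle_trans. apply (P_or_le HP); auto. apply (F_exists_le HP); auto. lra.
Qed.

Lemma P_partition {Omega F P} (HP : @prob_space Omega F P) (Q : Omega -> Prop)
  (A : nat -> Omega -> Prop) N :
  F Q -> (forall n, F (A n)) ->
  (forall m n w, m <> n -> A m w -> A n w -> False) ->
  P (fun w => Q w /\ exists n, (n <= N)%nat /\ A n w) = sum_f_R0 (fun n => P (fun w => Q w /\ A n w)) N.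
Proof.
  intros HQ HA Hd. induction N.
  - simpl. apply Pext. intros w; split. intros [h [n [h1 h2]]]. replace n with O in h2 by lia; auto.
    intros [h1 h2]. split; auto. exists O; auto.
  - simpl. rewrite <- IHN.
    rewrite (Pext P _ (fun w => (Q w /\ exists n, (n <= N)%nat /\ A n w) \/ (Q w /\ A (S N) w))).
    2:{ intros w; split. intros [hq [n [h1 h2]]]. destruct (Nat.eq_dec n (S N)). subst; auto.
        left; split; auto; exists n; split; auto; lia.
        intros [[hq [n [h1 h2]]]|[hq h]]; split; auto. exists n; split; auto. exists (S N); auto. }
    apply (P_add HP). apply (F_and HP); auto. apply (F_exists_le HP); auto. apply (F_and HP); auto.
    intros w [_ [n [h1 h2]]] [_ h3]. apply (Hd n (S N) w); auto. lia.
Qed.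


Fixpoint tsum {Omega} (P : (Omega -> Prop) -> R) (Y : Omega -> nat) (L : nat) : R :=
  match L with O => 0 | S L' => tsum P Y L' + P (fun w => (L <= Y w)%nat) end.

Lemma tsum_S {Omega} (P : (Omega -> Prop) -> R) Y L : tsum P Y (S L) = tsum P Y L + P (fun w => (S L <= Y w)%nat).
Proof. reflexivity. Qed.

Definition natmeas {Omega} (F : (Omega -> Prop) -> Prop) (Y : Omega -> nat) :=
  forall k, F (fun w => Y w = k).

Lemma F_ge {Omega F P} (HP : @prob_space Omega F P) Y : natmeas F Y -> forall j, F (fun w => (j <= Y w)%nat).
Proof.
  intros HY j. apply (Fext F (fun w => exists m, (j <= m)%nat /\ Y w = m)).
  { intros w; split. intros [m [h1 h2]]; lia. intros h; exists (Y w); auto. }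
  apply (F_exists HP). intros m. destruct (le_lt_dec j m).
  - apply (Fext F (fun w => Y w = m)). intros; tauto. auto.
  - apply (Fext F (fun _ => False)). intros; split; [tauto|lia]. apply (F_false HP).
Qed.

Lemma tsum_nonneg {Omega F P} (HP : @prob_space Omega F P) Y : natmeas F Y -> forall L, 0 <= tsum P Y L.
Proof.
  intros HY L; induction L; simpl. lra.
  assert (0 <= P (fun w => (S L <= Y w)%nat)) by (apply (P_nonneg HP); apply (F_ge HP); auto). lra.
Qed.

Lemma tsum_mono_L {Omega F P} (HP : @prob_space Omega F P) Y : natmeas F Y ->
  forall L L', (L <= L')%nat -> tsum P Y L <= tsum P Y L'.
Proof.
  intros HY L L' h. induction h. lra. simpl.
  assert (0 <= P (fun w => (S m <= Y w)%nat)) by (apply (P_nonneg HP); apply (F_ge HP); auto). lra.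
Qed.

Lemma expect_tsum_gen {Omega F P} (HP : @prob_space Omega F P) Y : natmeas F Y ->
  forall n, expect_nat P n Y = tsum P Y n - INR n * P (fun w => (S n <= Y w)%nat).
Proof.
  intros HY n. unfold expect_nat. induction n.
  - simpl. lra.
  - simpl sum_f_R0. rewrite IHn. simpl tsum.
    assert (H : P (fun w => (S n <= Y w)%nat) = P (fun w => Y w = S n) + P (fun w => (S (S n) <= Y w)%nat)).
    { rewrite <- (P_add HP). apply Pext. intros w; lia. auto. apply (F_ge HP); auto. intros; lia. }
    rewrite H. rewrite (S_INR n). change (match n with 0%nat => 1 | S _ => INR n + 1 end) with (INR (S n)). rewrite (S_INR n). ring.
Qed.

Lemma expect_tsum {Omega F P} (HP : @prob_space Omega F P) Y n : natmeas F Y ->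
  (forall w, (Y w <= n)%nat) -> expect_nat P n Y = tsum P Y n.
Proof.
  intros HY Hb. rewrite (expect_tsum_gen HP Y HY n).
  rewrite (Pext P _ (fun _ => False)). rewrite (P_false HP). ring.
  intros w; split; [|tauto]. specialize (Hb w). lia.
Qed.

Lemma tsum_mono_Y {Omega F P} (HP : @prob_space Omega F P) Y Z : natmeas F Y -> natmeas F Z ->
  (forall w, (Y w <= Z w)%nat) -> forall L, tsum P Y L <= tsum P Z L.
Proof.
  intros HY HZ H L. induction L; simpl. lra.
  assert (P (fun w => (S L <= Y w)%nat) <= P (fun w => (S L <= Z w)%nat)).
  { apply (P_mono HP); try apply (F_ge HP); auto. intros w h; specialize (H w); lia. }
  lra.
Qed.

Lemma tsum_shift {Omega F P} (HP : @prob_space Omega F P) Y Z u : natmeas F Y -> natmeas F Z ->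
  (forall w, (Y w <= u + Z w)%nat) -> forall L, tsum P Y L <= INR u + tsum P Z L.
Proof.
  intros HY HZ H.
  assert (G : forall L, tsum P Y L <= INR (Nat.min L u) + tsum P Z (L - u)).
  { induction L. simpl. lra.
    rewrite tsum_S. destruct (le_lt_dec u L) as [h|h].
    - replace (Nat.min (S L) u) with (Nat.min L u) by lia.
      replace (S L - u)%nat with (S (L - u)) by lia. rewrite tsum_S.
      assert (P (fun w => (S L <= Y w)%nat) <= P (fun w => (S (L - u) <= Z w)%nat)).
      { apply (P_mono HP); try apply (F_ge HP); auto. intros w hw; specialize (H w); lia. }
      lra.
    - replace (Nat.min (S L) u) with (S (Nat.min L u)) by lia.
      replace (S L - u)%nat with (L - u)%nat by lia. rewrite S_INR.
      assert (P (fun w => (S L <= Y w)%nat) <= 1) by (apply (P_le1 HP); apply (F_ge HP); auto).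
      lra. }
  intros L. eapply Rle_trans. apply G.
  assert (INR (Nat.min L u) <= INR u) by (apply le_INR; lia).
  assert (tsum P Z (L - u) <= tsum P Z L) by (apply (tsum_mono_L HP); auto; lia).
  lra.
Qed.

Definition indic {Omega} (E : Omega -> Prop) (w : Omega) : nat :=
  if excluded_middle_informative (E w) then 1%nat else 0%nat.

Fixpoint cnt {Omega} (E : nat -> Omega -> Prop) (m : nat) (w : Omega) : nat :=
  match m with O => O | S m' => (cnt E m' w + indic (E m') w)%nat end.

Fixpoint rsum (f : nat -> R) (m : nat) : R :=
  match m with O => 0 | S m' => rsum f m' + f m' end.

Lemma natmeas_add_ind {Omega F P} (HP : @prob_space Omega F P) Z E : natmeas F Z -> F E ->
  natmeas F (fun w => (Z w + indic E w)%nat).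
Proof.
  intros HZ HE k. unfold indic.
  apply (Fext F (fun w => (Z w = k /\ ~ E w) \/ (E w /\ exists j, (j <= k)%nat /\ (Z w = j /\ S j = k)))).
  { intros w. destruct (excluded_middle_informative (E w)); split; intros h.
    - destruct h as [[_ h]|[_ [j [_ [h1 h2]]]]]; [tauto|lia].
    - right. split; auto. exists (Z w). lia.
    - destruct h as [[h _]|[h _]]; [lia|tauto].
    - left; split; auto. lia. }
  apply (F_or HP). apply (F_and HP); auto. apply (F_not HP); auto.
  apply (F_and HP); auto. apply (F_exists_le HP). intros n _.
  destruct (Nat.eq_dec (S n) k).
  - apply (Fext F (fun w => Z w = n)). intros; tauto. auto.
  - apply (Fext F (fun _ => False)). intros; tauto. apply (F_false HP).
Qed.

Lemma natmeas_cnt {Omega F P} (HP : @prob_space Omega F P) E : (forall i, F (E i)) ->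
  forall m, natmeas F (cnt E m).
Proof.
  intros HE m. induction m; simpl.
  - intros k. destruct (Nat.eq_dec 0 k).
    apply (Fext F (fun _ => True)). intros; split; auto. apply (F_true HP).
    apply (Fext F (fun _ => False)). intros; split; [tauto|lia]. apply (F_false HP).
  - apply (natmeas_add_ind HP); auto.
Qed.

Lemma tsum_add_ind {Omega F P} (HP : @prob_space Omega F P) Z E L : natmeas F Z -> F E ->
  (forall w, (Z w <= L)%nat) ->
  tsum P (fun w => (Z w + indic E w)%nat) (S L) <= tsum P Z L + P E.
Proof.
  intros HZ HE Hb.
  assert (G : forall j, tsum P (fun w => (Z w + indic E w)%nat) j <=
       tsum P Z j + P (fun w => E w /\ exists k, (S k <= j)%nat /\ Z w = k)).
  { induction j.
    - simpl. rewrite (Pext P _ (fun _ => False)). rewrite (P_false HP). lra.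
      intros w; split; [|tauto]. intros [_ [k [h _]]]; lia.
    - simpl tsum.
      assert (H1 : P (fun w => (S j <= Z w + indic E w)%nat) <= P (fun w => (S j <= Z w)%nat) + P (fun w => E w /\ Z w = j)).
      { eapply Rle_trans. 2:{ apply (P_or_le HP). apply (F_ge HP); auto. apply (F_and HP); auto. }
        apply (P_mono HP). apply (F_ge HP). apply (natmeas_add_ind HP); auto.
        apply (F_or HP). apply (F_ge HP); auto. apply (F_and HP); auto.
        intros w. unfold indic. destruct (excluded_middle_informative (E w)); intros h.
        destruct (Nat.eq_dec (Z w) j). right; auto. left; lia. left; lia. }
      assert (H2 : P (fun w => E w /\ exists k, (S k <= S j)%nat /\ Z w = k) =
                   P (fun w => E w /\ exists k, (S k <= j)%nat /\ Z w = k) + P (fun w => E w /\ Z w = j)).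
      { rewrite <- (P_add HP). apply Pext. intros w; split.
        intros [he [k [h1 h2]]]. destruct (Nat.eq_dec k j). right; subst; auto. left; split; auto; exists k; split; auto; lia.
        intros [[he [k [h1 h2]]]|[he h]]; split; auto. exists k; split; auto. exists j; split; auto.
        apply (F_and HP); auto. apply (Fext F (fun w => exists k, (k <= j)%nat /\ (S k <= j /\ Z w = k)%nat)).
        intros w; split; intros [k hk]; exists k; lia. apply (F_exists_le HP). intros n _.
        destruct (le_lt_dec (S n) j). apply (Fext F (fun w => Z w = n)). intros; lia. auto.
        apply (Fext F (fun _ => False)). intros; lia. apply (F_false HP).
        apply (F_and HP); auto.
        intros w [_ [k [h1 h2]]] [_ h3]. lia. }
      lra. }
  eapply Rle_trans. apply G. simpl tsum.
  rewrite (Pext P (fun w => (S L <= Z w)%nat) (fun _ => False)).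
  2:{ intros w; split; [|tauto]. specialize (Hb w); lia. }
  rewrite (P_false HP).
  assert (P (fun w => E w /\ exists k, (S k <= S L)%nat /\ Z w = k) <= P E).
  { apply (P_mono HP); auto. 2:{ intros w h; apply h. }
    apply (Fext F (fun w => E w /\ True)). intros w; split. intros [h _]; split; auto. exists (Z w); split; auto. specialize (Hb w); lia.
    intros [h _]; auto. apply (F_and HP); auto. apply (F_true HP). }
  lra.
Qed.

Lemma cnt_le {Omega} (E : nat -> Omega -> Prop) m w : (cnt E m w <= m)%nat.
Proof. induction m; simpl. lia. unfold indic. destruct excluded_middle_informative; lia. Qed.

Lemma tsum_cnt {Omega F P} (HP : @prob_space Omega F P) E : (forall i, F (E i)) ->
  forall m, tsum P (cnt E m) m <= rsum (fun i => P (E i)) m.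
Proof.
  intros HE m. induction m. simpl; lra.
  simpl cnt. simpl rsum. eapply Rle_trans. apply (tsum_add_ind HP). apply (natmeas_cnt HP); auto. auto.
  intros; apply cnt_le. lra.
Qed.

Lemma expect_bound {Omega F P} (HP : @prob_space Omega F P) (Y : Omega -> nat) n E m u :
  natmeas F Y -> (forall w, (Y w <= n)%nat) -> (forall i, F (E i)) ->
  (forall w, (Y w <= u + cnt E m w)%nat) ->
  expect_nat P n Y <= INR u + rsum (fun i => P (E i)) m.
Proof.
  intros HY Hb HE H. rewrite (expect_tsum HP); auto.
  assert (HC := natmeas_cnt HP E HE m).
  eapply Rle_trans. apply (tsum_shift HP Y (cnt E m) u); auto.
  assert (tsum P (cnt E m) n <= tsum P (cnt E m) (n + m)) by (apply (tsum_mono_L HP); auto; lia).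
  assert (tsum P (cnt E m) (n + m) = tsum P (cnt E m) m).
  { replace (n + m)%nat with (m + n)%nat by lia. clear Hb H H0. induction n. f_equal; lia.
    replace (m + S n)%nat with (S (m + n)) by lia. rewrite tsum_S. rewrite IHn.
    rewrite (Pext P _ (fun _ => False)). rewrite (P_false HP). lra.
    intros w; split; [|tauto]. pose proof (cnt_le E m w). lia. }
  assert (tsum P (cnt E m) m <= rsum (fun i => P (E i)) m) by (apply (tsum_cnt HP); auto).
  lra.
Qed.


Definition atom (M : nat) (y : R) (j : nat) : Prop := INR j - 1 < INR M * y <= INR j.

Lemma ceil_exists : forall N x, 0 <= x <= INR N -> exists j, (j <= N)%nat /\ INR j - 1 < x <= INR j.
Proof.
  induction N; intros x [h1 h2].
  - simpl in h2. exists O. split. lia. simpl; lra.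
  - destruct (Rle_dec x (INR N)) as [h|h].
    + destruct (IHN x) as [j [hj1 hj2]]; [lra|]. exists j; split; [lia|auto].
    + exists (S N). split; [lia|]. rewrite S_INR in *. lra.
Qed.

Lemma atom_exists M y : 0 <= y <= 1 -> exists j, (j <= M)%nat /\ atom M y j.
Proof.
  intros h. apply ceil_exists. pose proof (pos_INR M). split; nra.
Qed.

Lemma atom_unique M y j k : atom M y j -> atom M y k -> j = k.
Proof.
  unfold atom; intros h1 h2. destruct (lt_eq_lt_dec j k) as [[h|h]|h]; auto; exfalso.
  - assert (INR (S j) <= INR k) by (apply le_INR; lia). rewrite S_INR in H. lra.
  - assert (INR (S k) <= INR j) by (apply le_INR; lia). rewrite S_INR in H. lra.
Qed.

Lemma atom_le M y j : y <= 1 -> atom M y j -> (j <= M)%nat.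
Proof.
  unfold atom; intros hy h. pose proof (pos_INR M).
  assert (INR j < INR (S M)) by (rewrite S_INR; nra). apply INR_lt in H0. lia.
Qed.

Lemma le_div_iff a b c : 0 < c -> (c * a <= b <-> a <= b / c).
Proof.
  intros hc. assert (c * / c = 1) by (field; lra). assert (0 < / c) by (apply Rinv_0_lt_compat; auto).
  unfold Rdiv. split; intros h. 
  - replace a with (c * a * / c) by (field; lra). nra.
  - replace b with (b * / c * c) by (field; lra). nra.
Qed.

Lemma F_atom {Omega F P} (HP : @prob_space Omega F P) (Y : Omega -> R) M j :
  (1 <= M)%nat -> measurable_rv F Y -> F (fun w => atom M (Y w) j).
Proof.
  intros hM hY. assert (0 < INR M) by (apply lt_0_INR; lia).
  apply (Fext F (fun w => Y w <= INR j / INR M /\ ~ (Y w <= (INR j - 1) / INR M))).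
  { intros w. unfold atom. rewrite <- !le_div_iff by auto. lra. }
  apply (F_and HP). apply hY. apply (F_not HP). apply hY.
Qed.

Fixpoint atomev {I Omega} (Y : I -> Omega -> R) (M : nat) (l : list I) (k : list nat) (w : Omega) : Prop :=
  match l, k with
  | nil, nil => True
  | i :: l', j :: k' => atom M (Y i w) j /\ atomev Y M l' k' w
  | _, _ => False
  end.

Fixpoint sumtup (M n : nat) (h : list nat -> R) : R :=
  match n with O => h nil | S n' => sum_f_R0 (fun j => sumtup M n' (fun k => h (j :: k))) M end.

Lemma sumtup_le M n : forall h h', (forall k, h k <= h' k) -> sumtup M n h <= sumtup M n h'.
Proof.
  induction n; intros h h' H; simpl; auto. apply sum_Rle. intros; apply IHn. auto.
Qed.

Lemma sumtup_eq M n : forall h h', (forall k, h k = h' k) -> sumtup M n h = sumtup M n h'.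
Proof.
  intros. apply Rle_antisym; apply sumtup_le; intros; rewrite H; lra.
Qed.

Lemma sumtup_scal M n : forall a h, sumtup M n (fun k => a * h k) = a * sumtup M n h.
Proof.
  induction n; intros a h; simpl; auto. rewrite scal_sum. apply sum_eq. intros i _.
  rewrite (IHn a (fun k => h (i :: k))). ring.
Qed.

Fixpoint prodl (phi : nat -> R) (k : list nat) : R :=
  match k with nil => 1 | j :: k' => phi j * prodl phi k' end.

Lemma sumtup_prod M n : forall phi, sumtup M n (prodl phi) = (sum_f_R0 phi M) ^ n.
Proof.
  induction n; intros phi; simpl; auto.
  rewrite Rmult_comm, scal_sum. apply sum_eq. intros i _.
  rewrite <- IHn. rewrite <- sumtup_scal. apply sumtup_eq. intros k; simpl; ring.
Qed.

Lemma P_tup {I Omega F P} (HP : @prob_space Omega F P) (Y : I -> Omega -> R) M (HM : (1 <= M)%nat) :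
  forall l, (forall i, In i l -> measurable_rv F (Y i)) -> (forall i w, In i l -> 0 <= Y i w <= 1) ->
  forall Q, F Q -> P Q = sumtup M (length l) (fun k => P (fun w => Q w /\ atomev Y M l k w)).
Proof.
  induction l as [|i l IH]; intros Hm Hr Q HQ.
  - simpl. apply Pext. intros w; tauto.
  - simpl length. simpl sumtup.
    rewrite (Pext P Q (fun w => Q w /\ exists j, (j <= M)%nat /\ atom M (Y i w) j)).
    2:{ intros w; split; [|tauto]. intros h; split; auto. apply atom_exists. apply Hr; simpl; auto. }
    rewrite (P_partition HP). apply sum_eq. intros j _.
    rewrite (IH ltac:(intros; apply Hm; simpl; auto) ltac:(intros; apply Hr; simpl; auto)).
    apply sumtup_eq. intros k. apply Pext. intros w; simpl; tauto.
    apply (F_and HP); auto. apply (F_atom HP); auto. apply Hm; simpl; auto.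
    auto. intros; apply (F_atom HP); auto; apply Hm; simpl; auto.
    intros m n w hmn h1 h2. apply hmn. eapply atom_unique; eauto.
Qed.

Definition Ev {I Omega} (Y : I -> Omega -> R) M l (g : list nat -> Prop) (w : Omega) : Prop :=
  exists k, atomev Y M l k w /\ g k.

Lemma atomev_unique {I Omega} (Y : I -> Omega -> R) M l : forall k k' w,
  atomev Y M l k w -> atomev Y M l k' w -> k = k'.
Proof.
  induction l; intros [|j k] [|j' k'] w; simpl; try tauto.
  intros [h1 h2] [h3 h4]. f_equal. eapply atom_unique; eauto. eauto.
Qed.

Lemma F_Ev {I Omega F P} (HP : @prob_space Omega F P) (Y : I -> Omega -> R) M (HM : (1 <= M)%nat) :
  forall l, (forall i, In i l -> measurable_rv F (Y i)) -> (forall i w, In i l -> 0 <= Y i w <= 1) ->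
  forall g, F (Ev Y M l g).
Proof.
  induction l as [|i l IH]; intros Hm Hr g.
  - destruct (classic (g nil)).
    + apply (Fext F (fun _ => True)). intros w; split; auto. intros _. exists nil; simpl; auto. apply (F_true HP).
    + apply (Fext F (fun _ => False)). intros w; split; [tauto|]. intros [[|j k] [h1 h2]]; simpl in h1; tauto.
      apply (F_false HP).
  - apply (Fext F (fun w => exists j, (j <= M)%nat /\ (atom M (Y i w) j /\ Ev Y M l (fun k => g (j :: k)) w))).
    + intros w; split.
      * intros [j [_ [h1 [k [h2 h3]]]]]. exists (j :: k); simpl; auto.
      * intros [[|j k] [h1 h2]]; simpl in h1; try tauto. destruct h1 as [h1 h1'].
        exists j. split. eapply atom_le; eauto. apply Hr; simpl; auto. split; auto. exists k; auto.
    + apply (F_exists_le HP). intros j _. apply (F_and HP). apply (F_atom HP); auto. apply Hm; simpl; auto.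
      apply IH; intros; [apply Hm|apply Hr]; simpl; auto.
Qed.

Lemma F_atomev {I Omega F P} (HP : @prob_space Omega F P) (Y : I -> Omega -> R) M (HM : (1 <= M)%nat) :
  forall l, (forall i, In i l -> measurable_rv F (Y i)) -> forall k, F (atomev Y M l k).
Proof.
  induction l as [|i l IH]; intros Hm [|j k]; simpl.
  apply (F_true HP). apply (F_false HP). apply (F_false HP).
  apply (F_and HP). apply (F_atom HP); auto. apply Hm; simpl; auto. apply IH. intros; apply Hm; simpl; auto.
Qed.

Lemma P_Ev_bound {I Omega F P} (HP : @prob_space Omega F P) (Y : I -> Omega -> R) M (HM : (1 <= M)%nat)
  l g (rho : list nat -> R) :
  (forall i, In i l -> measurable_rv F (Y i)) -> (forall i w, In i l -> 0 <= Y i w <= 1) ->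
  (forall k, 0 <= rho k) -> (forall k, g k -> 1 <= rho k) ->
  P (Ev Y M l g) <= sumtup M (length l) (fun k => P (atomev Y M l k) * rho k).
Proof.
  intros Hm Hr Hrho Hg. rewrite (P_tup HP Y M HM l Hm Hr); [| apply (F_Ev HP); auto].
  apply sumtup_le. intros k.
  assert (HA : 0 <= P (atomev Y M l k)) by (apply (P_nonneg HP); apply (F_atomev HP); auto).
  destruct (classic (g k)) as [h|h].
  - assert (P (fun w => Ev Y M l g w /\ atomev Y M l k w) <= P (atomev Y M l k)).
    { apply (P_mono HP). apply (F_and HP). apply (F_Ev HP); auto. apply (F_atomev HP); auto.
      apply (F_atomev HP); auto. intros w [_ h']; auto. }
    specialize (Hg k h). nra.
  - rewrite (Pext P _ (fun _ => False)). rewrite (P_false HP). specialize (Hrho k). nra.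
    intros w; split; [|tauto]. intros [[k' [h1 h2]] h3].
    rewrite (atomev_unique Y M l k' k w h1 h3) in h2. tauto.
Qed.


Lemma F_Forall {X Omega F P} (HP : @prob_space Omega F P) (Q : X -> Omega -> Prop) l :
  (forall x, In x l -> F (Q x)) -> F (fun w => Forall (fun x => Q x w) l).
Proof.
  induction l as [|x l IH]; intros H.
  - apply (Fext F (fun _ => True)). intros; split; auto. apply (F_true HP).
  - apply (Fext F (fun w => Q x w /\ Forall (fun x => Q x w) l)).
    intros w; rewrite Forall_cons_iff; tauto.
    apply (F_and HP). apply H; simpl; auto. apply IH; intros; apply H; simpl; auto.
Qed.

Definition upd {I} (c : I -> R) (i : I) (b : R) : I -> R :=
  fun j => if excluded_middle_informative (j = i) then b else c j.

Lemma box {I Omega F P} (HP : @prob_space Omega F P) (Y : I -> Omega -> R) (L : list I)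
  (Hmeas : forall i, In i L -> measurable_rv F (Y i))
  (Hind : forall l0 c, NoDup l0 -> incl l0 L ->
     P (fun w => Forall (fun i => Y i w <= c i) l0) = fold_right Rmult 1 (map (fun i => P (fun w => Y i w <= c i)) l0)) :
  forall (l1 : list (I * R * R)) l2 c,
  NoDup (map (fun t => fst (fst t)) l1 ++ l2) -> incl (map (fun t => fst (fst t)) l1 ++ l2) L ->
  Forall (fun t => snd (fst t) <= snd t) l1 ->
  P (fun w => Forall (fun t => snd (fst t) < Y (fst (fst t)) w <= snd t) l1 /\ Forall (fun i => Y i w <= c i) l2)
  = fold_right Rmult 1 (map (fun t => P (fun w => Y (fst (fst t)) w <= snd t) - P (fun w => Y (fst (fst t)) w <= snd (fst t))) l1)
    * fold_right Rmult 1 (map (fun i => P (fun w => Y i w <= c i)) l2).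
Proof.
  induction l1 as [|[[i a] b] l1 IH]; intros l2 c Hnd Hinc Hab.
  - simpl in *. rewrite Rmult_1_l. rewrite <- Hind; auto. apply Pext; intros w; split; [tauto|].
    intros h; split; auto.
  - simpl in *. inversion Hab; subst. simpl in H1.
    set (R0 := fun w => Forall (fun t => snd (fst t) < Y (fst (fst t)) w <= snd t) l1 /\ Forall (fun i => Y i w <= c i) l2).
    assert (HinL : In i L) by (apply Hinc; simpl; auto).
    assert (HR0 : F R0).
    { apply (F_and HP). apply (F_Forall HP). intros [[j a'] b'] hj. simpl.
      assert (In j L) by (apply Hinc; right; apply in_or_app; left; apply (in_map (fun t => fst (fst t))) in hj; auto).
      apply (Fext F (fun w => Y j w <= b' /\ ~ Y j w <= a')). intros; lra.
      apply (F_and HP). apply Hmeas; auto. apply (F_not HP). apply Hmeas; auto.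
      apply (F_Forall HP). intros j hj. apply Hmeas. apply Hinc. right; apply in_or_app; auto. }
    assert (Hnd' : NoDup (map (fun t => fst (fst t)) l1 ++ i :: l2)).
    { eapply Permutation_NoDup. 2: exact Hnd. apply Permutation_middle. }
    assert (Hinc' : incl (map (fun t => fst (fst t)) l1 ++ i :: l2) L).
    { intros x hx. apply Hinc. apply Permutation_in with (l := map (fun t => fst (fst t)) l1 ++ i :: l2); auto.
      apply Permutation_sym, Permutation_middle. }
    assert (Hnot : ~ In i l2).
    { intros h. apply NoDup_cons_iff in Hnd. destruct Hnd as [h' _]. apply h'. apply in_or_app; auto. }
    assert (Hc : forall x, In x l2 -> forall v, upd c i v x = c x).
    { intros x hx v. unfold upd. destruct excluded_middle_informative; auto. subst; tauto. }
    assert (Ev : forall v, P (fun w => Y i w <= v /\ R0 w) =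
        fold_right Rmult 1 (map (fun t => P (fun w => Y (fst (fst t)) w <= snd t) - P (fun w => Y (fst (fst t)) w <= snd (fst t))) l1)
        * (P (fun w => Y i w <= v) * fold_right Rmult 1 (map (fun i => P (fun w => Y i w <= c i)) l2))).
    { intros v. rewrite <- (map_ext_in (fun i0 => P (fun w => Y i0 w <= upd c i v i0))).
      2:{ intros x hx. rewrite Hc; auto. }
      replace (P (fun w => Y i w <= v)) with (P (fun w => Y i w <= upd c i v i)).
      2:{ unfold upd; destruct excluded_middle_informative; tauto. }
      change (P (fun w : Omega => Y i w <= upd c i v i) * fold_right Rmult 1 (map (fun i0 : I => P (fun w : Omega => Y i0 w <= upd c i v i0)) l2))
        with (fold_right Rmult 1 (map (fun i0 : I => P (fun w : Omega => Y i0 w <= upd c i v i0)) (i :: l2))).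
      rewrite <- IH; auto. apply Pext. intros w. unfold R0. rewrite Forall_cons_iff.
      unfold upd at 1. destruct excluded_middle_informative; [|tauto].
      split. intros [h1 [h2 h3]]. split; auto. split; auto. rewrite Forall_forall in *. intros x hx. rewrite Hc; auto.
      intros [h1 [h2 h3]]. split; auto. split; auto. rewrite Forall_forall in *. intros x hx. rewrite <- (Hc x hx v); auto. }
    pose proof (Ev a) as Ea. pose proof (Ev b) as Eb.
    rewrite (P_split HP (fun w => Y i w <= b /\ R0 w) (fun w => Y i w <= a)) in Eb.
    2:{ apply (F_and HP); auto. apply Hmeas; auto. } 2:{ apply Hmeas; auto. }
    rewrite (Pext P (fun w => (Y i w <= b /\ R0 w) /\ Y i w <= a) (fun w => Y i w <= a /\ R0 w)) in Eb.
    2:{ intros w; split; [tauto|]. intros [h1 h2]; split; [split; [lra|exact h2]|exact h1]. }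
    rewrite (Pext P (fun w => (Y i w <= b /\ R0 w) /\ ~ Y i w <= a)
      (fun w => Forall (fun t => snd (fst t) < Y (fst (fst t)) w <= snd t) ((i, a, b) :: l1) /\ Forall (fun i => Y i w <= c i) l2)) in Eb.
    2:{ intros w. rewrite Forall_cons_iff. simpl. unfold R0. split. intros [[h1 [h2 h3]] h4]. repeat split; auto; lra.
        intros [[h1 h2] h3]. repeat split; auto; lra. }
    simpl. lra.
Qed.


Definition mkbox {I} (M : nat) (l : list I) (k : list nat) : list (I * R * R) :=
  map (fun p => (fst p, (INR (snd p) - 1) / INR M, INR (snd p) / INR M)) (combine l k).

Lemma mkbox_fst {I} M (l : list I) : forall k, length l = length k -> map (fun t => fst (fst t)) (mkbox M l k) = l.
Proof.
  induction l; intros [|j k] h; simpl in *; try lia; auto. f_equal. apply IHl. lia.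
Qed.

Lemma atomev_box {I Omega} (Y : I -> Omega -> R) M (HM : (1 <= M)%nat) l : forall k w, length l = length k ->
  (atomev Y M l k w <-> Forall (fun t => snd (fst t) < Y (fst (fst t)) w <= snd t) (mkbox M l k)).
Proof.
  assert (hM : 0 < INR M) by (apply lt_0_INR; lia).
  induction l; intros [|j k] w h; simpl in *; try lia.
  - split; auto.
  - change (mkbox M (a::l) (j::k)) with ((a, (INR j - 1)/INR M, INR j / INR M) :: mkbox M l k).
    rewrite Forall_cons_iff. simpl. rewrite <- (IHl k w) by lia. unfold atom.
    assert (e1 : INR j - 1 < INR M * Y a w <-> (INR j - 1) / INR M < Y a w).
    { split; intros. apply Rnot_le_lt. intros h'. apply le_div_iff in h'; auto. lra.
      apply Rnot_le_lt. intros h'. assert (Y a w <= (INR j - 1) / INR M) by (apply le_div_iff; auto). lra. }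
    rewrite e1, (le_div_iff _ _ _ hM). tauto.
Qed.

Lemma mkbox_le {I} M (HM : (1 <= M)%nat) (l : list I) k : Forall (fun t => snd (fst t) <= snd t) (mkbox M l k).
Proof.
  assert (hM : 0 < INR M) by (apply lt_0_INR; lia).
  unfold mkbox. rewrite Forall_forall. intros t ht. apply in_map_iff in ht. destruct ht as [[i j] [<- _]].
  simpl. unfold Rdiv. apply Rmult_le_compat_r. left; apply Rinv_0_lt_compat; auto. lra.
Qed.

Lemma P_atomev {I Omega F P} (HP : @prob_space Omega F P) (Y : I -> Omega -> R) (L : list I) M (HM : (1 <= M)%nat)
  (Hmeas : forall i, In i L -> measurable_rv F (Y i))
  (Hind : forall l0 c, NoDup l0 -> incl l0 L ->
     P (fun w => Forall (fun i => Y i w <= c i) l0) = fold_right Rmult 1 (map (fun i => P (fun w => Y i w <= c i)) l0))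
  (G : R -> R) (Hid : forall i c, In i L -> P (fun w => Y i w <= c) = G c) :
  forall l k, NoDup l -> incl l L -> length l = length k ->
  P (atomev Y M l k) = prodl (fun j => G (INR j / INR M) - G ((INR j - 1) / INR M)) k.
Proof.
  intros l k Hnd Hinc Hlen.
  rewrite (Pext P _ (fun w => Forall (fun t => snd (fst t) < Y (fst (fst t)) w <= snd t) (mkbox M l k) /\ Forall (fun i => Y i w <= (fun _ => 0) i) nil)).
  2:{ intros w. rewrite atomev_box; auto. split; [intros h; split; auto|tauto]. }
  rewrite (box HP Y L Hmeas Hind (mkbox M l k) nil (fun _ => 0)). 
  2:{ rewrite app_nil_r, mkbox_fst; auto. } 2:{ rewrite app_nil_r, mkbox_fst; auto. } 2: apply mkbox_le; auto.
  simpl map. simpl fold_right. rewrite Rmult_1_r. clear Hnd. revert k Hlen. induction l; intros [|j k] h; simpl in *; try lia; auto.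
  change (mkbox M (a::l) (j::k)) with ((a, (INR j - 1)/INR M, INR j / INR M) :: mkbox M l k).
  simpl map. simpl fold_right. simpl fst. simpl snd.
  change (map (fun p : I * nat => (fst p, (INR (snd p) - 1) / INR M, INR (snd p) / INR M)) (combine l k)) with (mkbox M l k). rewrite IHl. rewrite !Hid. auto. apply Hinc; simpl; auto. apply Hinc; simpl; auto.
  intros x hx; apply Hinc; simpl; auto. lia.
Qed.

Fixpoint sumv (v : nat -> R) (k : list nat) : R :=
  match k with nil => 0 | j :: k' => v j + sumv v k' end.

Lemma sumtup_eq_len M n : forall h h', (forall k, length k = n -> h k = h' k) -> sumtup M n h = sumtup M n h'.
Proof.
  induction n; intros h h' H; simpl. apply H; auto. apply sum_eq. intros i _. apply IHn.
  intros k hk. apply H. simpl; lia.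
Qed.

Lemma exp_sumv th v c0 k : exp (th * (sumv v k - c0)) = exp (- th * c0) * prodl (fun j => exp (th * v j)) k.
Proof.
  induction k; simpl. rewrite Rmult_1_r; f_equal; ring. 
  replace (th * (v a + sumv v k - c0)) with (th * v a + th * (sumv v k - c0)) by ring.
  rewrite exp_plus, IHk. ring.
Qed.

Lemma exp_ge_1plus x : 1 + x <= exp x.
Proof.
  destruct (Req_dec x 0). subst; rewrite exp_0; lra. left; apply exp_ineq1; auto.
Qed.

Lemma exp_convex th v : 0 <= v <= 1 -> exp (th * v) <= 1 - v + v * exp th.
Proof.
  intros hv.
  assert (h1 := exp_ge_1plus (- th * v)). assert (h2 := exp_ge_1plus (th * (1 - v))).
  assert (e1 : exp (th * v) * exp (- th * v) = 1) by (rewrite <- exp_plus; replace (th * v + - th * v) with 0 by ring; apply exp_0).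
  assert (e2 : exp (th * v) * exp (th * (1 - v)) = exp th) by (rewrite <- exp_plus; f_equal; ring).
  assert (hp := exp_pos (th * v)).
  assert ((1 - v) * exp (- th * v) + v * exp (th * (1 - v)) >= 1) by nra.
  nra.
Qed.

Lemma prodl_mult f g k : prodl f k * prodl g k = prodl (fun j => f j * g j) k.
Proof. induction k; simpl. ring. rewrite <- IHk. ring. Qed.

Lemma sum_nonneg_le (f : nat -> R) N : (forall j, (j <= N)%nat -> 0 <= f j) -> 0 <= sum_f_R0 f N.
Proof. intros H. induction N; simpl. apply H; lia. assert (0 <= f (S N)) by (apply H; lia).
  assert (0 <= sum_f_R0 f N) by (apply IHN; intros; apply H; lia). lra. Qed.

Lemma sum_lin (p v : nat -> R) e N : sum_f_R0 (fun j => p j * (1 - v j + v j * e)) N =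
  sum_f_R0 p N - sum_f_R0 (fun j => p j * v j) N + sum_f_R0 (fun j => p j * v j) N * e.
Proof. induction N; simpl. ring. rewrite IHN. ring. Qed.

Lemma chernoff {I Omega F P} (HP : @prob_space Omega F P) (Y : I -> Omega -> R) (L : list I) M (HM : (1 <= M)%nat)
  (Hmeas : forall i, In i L -> measurable_rv F (Y i))
  (Hrange : forall i w, In i L -> 0 <= Y i w <= 1)
  (Hind : forall l0 c, NoDup l0 -> incl l0 L ->
     P (fun w => Forall (fun i => Y i w <= c i) l0) = fold_right Rmult 1 (map (fun i => P (fun w => Y i w <= c i)) l0))
  (G : R -> R) (Hid : forall i c, In i L -> P (fun w => Y i w <= c) = G c)
  (p : nat -> R) (Hp : p = fun j => G (INR j / INR M) - G ((INR j - 1) / INR M))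
  (Hp0 : forall j, (j <= M)%nat -> 0 <= p j) (Hp1 : sum_f_R0 p M = 1)
  (v : nat -> R) (Hv : forall j, (j <= M)%nat -> 0 <= v j <= 1) (th c0 : R) (g : list nat -> Prop)
  (Hg : forall k, g k -> th * c0 <= th * sumv v k) l :
  NoDup l -> incl l L ->
  P (Ev Y M l g) <= exp (- th * c0) * (1 - sum_f_R0 (fun j => p j * v j) M + sum_f_R0 (fun j => p j * v j) M * exp th) ^ (length l).
Proof.
  intros Hnd Hinc.
  eapply Rle_trans. apply (P_Ev_bound HP Y M HM l g (fun k => exp (th * (sumv v k - c0)))).
  intros; apply Hmeas; auto. intros; apply Hrange; auto.
  intros; left; apply exp_pos.
  intros k hk. specialize (Hg k hk). rewrite <- exp_0. destruct (Rle_dec (th * (sumv v k - c0)) 0) as [h|h].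
  assert (th * (sumv v k - c0) = 0) by nra. rewrite H; lra. left; apply exp_increasing; lra.
  rewrite (sumtup_eq_len M (length l) _ (fun k => exp (- th * c0) * prodl (fun j => p j * exp (th * v j)) k)).
  2:{ intros k hk. rewrite (P_atomev HP Y L M HM Hmeas Hind G Hid l k Hnd Hinc (eq_sym hk)).
      rewrite exp_sumv. rewrite <- Hp. rewrite <- prodl_mult. ring. }
  rewrite sumtup_scal, sumtup_prod.
  apply Rmult_le_compat_l. left; apply exp_pos.
  apply pow_incr. split.
  - apply sum_nonneg_le. intros j hj. apply Rmult_le_pos; auto. left; apply exp_pos.
  - replace (1 - sum_f_R0 (fun j => p j * v j) M + sum_f_R0 (fun j => p j * v j) M * exp th)
      with (sum_f_R0 (fun j => p j * (1 - v j + v j * exp th)) M).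
    apply sum_Rle. intros j hj. apply Rmult_le_compat_l; auto. apply exp_convex; auto.
    rewrite sum_lin, Hp1. auto.
Qed.


Lemma dpl_plus f g x a b : derivable_pt_lim f x a -> derivable_pt_lim g x b -> derivable_pt_lim (fun t => f t + g t) x (a + b).
Proof. intros; apply (derivable_pt_lim_plus f g); auto. Qed.
Lemma dpl_minus f g x a b : derivable_pt_lim f x a -> derivable_pt_lim g x b -> derivable_pt_lim (fun t => f t - g t) x (a - b).
Proof. intros; apply (derivable_pt_lim_minus f g); auto. Qed.
Lemma dpl_scal f c x a : derivable_pt_lim f x a -> derivable_pt_lim (fun t => c * f t) x (c * a).
Proof. intros; apply (derivable_pt_lim_scal f c); auto. Qed.
Lemma dpl_const c x : derivable_pt_lim (fun _ => c) x 0.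
Proof. apply (derivable_pt_lim_const c). Qed.
Lemma dpl_id x : derivable_pt_lim (fun t => t) x 1.
Proof. apply derivable_pt_lim_id. Qed.
Lemma dpl_eq f x a b : a = b -> derivable_pt_lim f x a -> derivable_pt_lim f x b.
Proof. intros; subst; auto. Qed.
Lemma dpl_mult f g x a b : derivable_pt_lim f x a -> derivable_pt_lim g x b -> derivable_pt_lim (fun t => f t * g t) x (a * g x + f x * b).
Proof. intros; apply (derivable_pt_lim_mult f g); auto. Qed.
Lemma dpl_div f g x a b : derivable_pt_lim f x a -> derivable_pt_lim g x b -> g x <> 0 ->
  derivable_pt_lim (fun t => f t / g t) x ((a * g x - b * f x) / Rsqr (g x)).
Proof. intros; apply (derivable_pt_lim_div f g); auto. Qed.
Lemma dpl_lncomp f x a : 0 < f x -> derivable_pt_lim f x a -> derivable_pt_lim (fun t => ln (f t)) x (/ f x * a).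
Proof. intros h d. apply (derivable_pt_lim_comp f ln); auto. apply derivable_pt_lim_ln; auto. Qed.

Section H.
Variable m : R.
Hypothesis hm : 0 <= m <= 1.
Definition Dm t := 1 - m + m * exp t.
Lemma Dm_pos t : 0 < Dm t.
Proof. unfold Dm. pose proof (exp_pos t). destruct (Rle_dec m (1/2)); nra. Qed.
Definition Lf t := t * m + t * t / 8 - ln (Dm t).
Definition Lp t := m + t / 4 - m * exp t / Dm t.
Definition Lpp t := 1 / 4 - (m * exp t / Dm t) * (1 - m * exp t / Dm t).

Lemma dDm x : derivable_pt_lim Dm x (m * exp x).
Proof.
  unfold Dm. apply (dpl_eq _ _ (0 + m * exp x)). ring.
  apply dpl_plus. apply dpl_const. apply dpl_scal. apply derivable_pt_lim_exp.
Qed.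

Lemma dLf x : derivable_pt_lim Lf x (Lp x).
Proof.
  unfold Lf, Lp. pose proof (Dm_pos x).
  apply (dpl_eq _ _ (1 * m + (1 * x + x * 1) / 8 - / Dm x * (m * exp x))).
  field. lra.
  apply dpl_minus. apply dpl_plus.
  apply (dpl_eq _ _ (1 * m + x * 0)). ring. apply dpl_mult. apply dpl_id. apply dpl_const.
  apply (dpl_eq _ _ (((1 * x + x * 1) * 8 - 0 * (x * x)) / Rsqr 8)). unfold Rsqr; field.
  apply (dpl_div (fun t => t * t) (fun _ => 8)). apply (dpl_mult (fun t => t) (fun t => t)); apply dpl_id. apply dpl_const. lra.
  apply dpl_lncomp; auto. apply dDm.
Qed.

Lemma dLp x : derivable_pt_lim Lp x (Lpp x).
Proof.
  unfold Lp, Lpp. pose proof (Dm_pos x).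
  apply (dpl_eq _ _ (0 + 1 / 4 - (m * exp x * Dm x - m * exp x * (m * exp x)) / Rsqr (Dm x))).
  unfold Rsqr; field; lra.
  apply dpl_minus. apply dpl_plus. apply dpl_const.
  apply (dpl_eq _ _ ((1 * 4 - 0 * x) / Rsqr 4)). unfold Rsqr; field.
  apply (dpl_div (fun t => t) (fun _ => 4)). apply dpl_id. apply dpl_const. lra.
  apply (dpl_div (fun t => m * exp t) (Dm)). apply (dpl_scal exp). apply derivable_pt_lim_exp. apply dDm. lra.
Qed.

Lemma Lpp_nonneg x : 0 <= Lpp x.
Proof. unfold Lpp. set (q := m * exp x / Dm x). pose proof (pow2_ge_0 (q - 1/2)). nra. Qed.

Lemma Lp0 : Lp 0 = 0.
Proof. unfold Lp, Dm. rewrite exp_0. field_simplify; try lra. Qed.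

Lemma Lf0 : Lf 0 = 0.
Proof. unfold Lf, Dm. rewrite exp_0. replace (1 - m + m * 1) with 1 by ring. rewrite ln_1. field. Qed.

Lemma Lp_sign c : c * Lp c >= 0.
Proof.
  destruct (Rtotal_order c 0) as [h|[h|h]].
  - destruct (MVT_cor2 Lp Lpp c 0 h) as [d [e _]]. intros; apply dLp.
    rewrite Lp0 in e. pose proof (Lpp_nonneg d). nra.
  - subst. lra.
  - destruct (MVT_cor2 Lp Lpp 0 c h) as [d [e _]]. intros; apply dLp.
    rewrite Lp0 in e. pose proof (Lpp_nonneg d). nra.
Qed.

Lemma Lf_nonneg th : 0 <= Lf th.
Proof.
  destruct (Rtotal_order th 0) as [h|[h|h]].
  - destruct (MVT_cor2 Lf Lp th 0 h) as [d [e hd]]. intros; apply dLf.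
    rewrite Lf0 in e. pose proof (Lp_sign d). assert (Lp d <= 0) by (destruct (Rle_dec (Lp d) 0); nra). nra.
  - subst. rewrite Lf0; lra.
  - destruct (MVT_cor2 Lf Lp 0 th h) as [d [e hd]]. intros; apply dLf.
    rewrite Lf0 in e. pose proof (Lp_sign d). assert (0 <= Lp d) by (destruct (Rle_dec 0 (Lp d)); nra). nra.
Qed.
End H.

Lemma exp_mono x y : x <= y -> exp x <= exp y.
Proof. intros [h|h]. left; apply exp_increasing; auto. subst; lra. Qed.

Lemma hoeffding_lemma m th : 0 <= m <= 1 -> 1 - m + m * exp th <= exp (th * m + th ^ 2 / 8).
Proof.
  intros hm. pose proof (Lf_nonneg m hm th). unfold Lf in H.
  rewrite <- (exp_ln (1 - m + m * exp th)) by (apply (Dm_pos m hm th)).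
  apply exp_mono. unfold Dm in H. simpl. lra.
Qed.


Definition pj {Omega} (P : (Omega -> Prop) -> R) (Y : Omega -> R) (M j : nat) : R :=
  P (fun w => Y w <= INR j / INR M) - P (fun w => Y w <= (INR j - 1) / INR M).
Definition mplus {Omega} (P : (Omega -> Prop) -> R) Y M := sum_f_R0 (fun j => pj P Y M j * (INR j / INR M)) M.
Definition mminus {Omega} (P : (Omega -> Prop) -> R) Y M := sum_f_R0 (fun j => pj P Y M j * (INR (pred j) / INR M)) M.

Lemma abel (a b : nat -> R) (Hb : forall j, b (S j) = a j) n :
  sum_f_R0 (fun j => INR j * (a j - b j)) (S n) = INR (S n) * a (S n) - sum_f_R0 a n.
Proof.
  induction n.
  - simpl. rewrite Hb. ring.
  - rewrite tech5. rewrite IHn. rewrite Hb. rewrite (tech5 a n). rewrite !S_INR. ring.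
Qed.

Lemma telesc (a : nat -> R) n : sum_f_R0 (fun j => a (S j) - a j) n = a (S n) - a O.
Proof. induction n; simpl. ring. rewrite IHn. ring. Qed.

Lemma sum_minus_gen (a b : nat -> R) N : sum_f_R0 (fun k => a k - b k) N = sum_f_R0 a N - sum_f_R0 b N.
Proof. induction N; simpl. ring. rewrite IHN. ring. Qed.

Lemma F_lt {Omega F P} (HP : @prob_space Omega F P) (Y : Omega -> R) a c :
  measurable_rv F Y -> 0 < a -> F (fun w => a * Y w < c).
Proof.
  intros hY ha.
  apply (Fext F (fun w => exists n, Y w <= (c - / INR (S n)) / a)).
  { intros w; split.
    - intros [n hn]. apply le_div_iff in hn; auto. assert (0 < / INR (S n)) by (apply Rinv_0_lt_compat, lt_0_INR; lia). lra.
    - intros h. destruct (archimed_cor1 (c - a * Y w)) as [N [h1 h2]]. lra.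
      exists (pred N). replace (S (pred N)) with N by lia. apply le_div_iff; auto. lra. }
  apply (F_exists HP). intros n. apply hY.
Qed.

Lemma mean_approx {Omega F P} (HP : @prob_space Omega F P) (Y : Omega -> R) mu :
  measurable_rv F Y -> (forall w, 0 <= Y w <= 1) -> is_mean01 P Y mu ->
  forall M, (1 <= M)%nat ->
  (forall j, 0 <= pj P Y M j) /\ sum_f_R0 (pj P Y M) M = 1 /\
  mminus P Y M >= mplus P Y M - / INR M /\
  forall N, M = S N ->
  sum_f_R0 (fun k => INR k / INR (S N) * P (fun w => INR k <= INR (S N) * Y w < INR (S k))) (S N) <= mplus P Y M
  <= sum_f_R0 (fun k => INR k / INR (S N) * P (fun w => INR k <= INR (S N) * Y w < INR (S k))) (S N) + / INR M.
Proof.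
  intros hY hR hmu M hM.
  assert (hMp : 0 < INR M) by (apply lt_0_INR; lia).
  set (Gn := fun j : nat => P (fun w => INR M * Y w <= INR j)).
  assert (HG : forall j, P (fun w => Y w <= INR j / INR M) = Gn j).
  { intros j. unfold Gn. apply Pext. intros w. rewrite le_div_iff; auto. lra. }
  set (bG := fun j => match j with O => 0 | S j' => Gn j' end).
  assert (HbG : forall j, P (fun w => Y w <= (INR j - 1) / INR M) = bG j).
  { intros [|j]; simpl bG.
    - rewrite (Pext P _ (fun _ => False)). apply (P_false HP). intros w; split; [|tauto].
      intros h. apply le_div_iff in h; auto. simpl in h. specialize (hR w). nra.
    - unfold Gn. apply Pext. intros w. rewrite S_INR. rewrite <- le_div_iff; auto. replace (INR j + 1 - 1) with (INR j) by ring. tauto. }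
  assert (Hpj : forall j, pj P Y M j = Gn j - bG j).
  { intros j. unfold pj. rewrite HG, HbG. auto. }
  assert (FG : forall c, F (fun w => INR M * Y w <= c)).
  { intros c. apply (Fext F (fun w => Y w <= c / INR M)). intros w; rewrite le_div_iff; auto. tauto. apply hY. }
  assert (Gmono : forall j k, (j <= k)%nat -> Gn j <= Gn k).
  { intros j k h. apply (P_mono HP); auto. intros w hw. apply le_INR in h. lra. }
  assert (Gn0 : 0 <= Gn O) by (apply (P_nonneg HP); auto).
  assert (GnM : Gn M = 1).
  { rewrite <- (P_total HP). unfold Gn. apply Pext. intros w; split; auto. intros _. specialize (hR w). nra. }
  split.
  { intros j. rewrite Hpj. destruct j; simpl. lra. assert (Gn j <= Gn (S j)) by (apply Gmono; lia). lra. }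
  assert (HS : sum_f_R0 (pj P Y M) M = 1).
  { rewrite (sum_eq _ (fun j => Gn j - bG j)) by (intros; apply Hpj).
    assert (forall n, sum_f_R0 (fun j => Gn j - bG j) n = Gn n).
    { induction n; simpl. ring. rewrite IHn. ring. }
    rewrite H. auto. }
  split. auto.
  split.
  { unfold mminus, mplus.
    assert (forall j, pj P Y M j * (INR (pred j) / INR M) >= pj P Y M j * (INR j / INR M) - pj P Y M j * / INR M).
    { intros j. assert (0 <= pj P Y M j). rewrite Hpj. destruct j; simpl. lra. assert (Gn j <= Gn (S j)) by (apply Gmono; lia). lra.
      assert (0 < / INR M) by (apply Rinv_0_lt_compat; auto).
      destruct j. simpl. unfold Rdiv. nra. simpl pred. rewrite S_INR. unfold Rdiv. nra. }
    assert (forall N, sum_f_R0 (fun j => pj P Y M j * (INR (pred j) / INR M)) N >=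
      sum_f_R0 (fun j => pj P Y M j * (INR j / INR M)) N - sum_f_R0 (pj P Y M) N * / INR M).
    { induction N. simpl. apply H. rewrite !tech5. specialize (H (S N)). rewrite Rmult_plus_distr_r. lra. }
    specialize (H0 M). rewrite HS in H0. lra. }
  intros N eN. subst M.
  set (Hn := fun j : nat => P (fun w => INR (S N) * Y w < INR j)).
  assert (FH : forall j, F (fun w => INR (S N) * Y w < INR j)) by (intros; apply (F_lt HP); auto).
  assert (HB : forall k, P (fun w => INR k <= INR (S N) * Y w < INR (S k)) = Hn (S k) - Hn k).
  { intros k. unfold Hn. rewrite (P_split HP (fun w => INR (S N) * Y w < INR (S k)) (fun w => INR (S N) * Y w < INR k)); auto.
    rewrite (Pext P (fun w => INR (S N) * Y w < INR (S k) /\ INR (S N) * Y w < INR k) (fun w => INR (S N) * Y w < INR k)).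
    rewrite (Pext P (fun w => INR (S N) * Y w < INR (S k) /\ ~ INR (S N) * Y w < INR k) (fun w => INR k <= INR (S N) * Y w < INR (S k))).
    ring. intros w; lra. intros w. rewrite (S_INR k). lra. }
  assert (E1 : sum_f_R0 (fun k => INR k / INR (S N) * P (fun w => INR k <= INR (S N) * Y w < INR (S k))) (S N)
     = / INR (S N) * (INR (S N) * Hn (S (S N)) - sum_f_R0 (fun k => Hn (S k)) N)).
  { rewrite <- (abel (fun k => Hn (S k)) Hn) by auto. rewrite scal_sum. apply sum_eq. intros i _.
    rewrite HB. unfold Rdiv. ring. }
  assert (E2 : mplus P Y (S N) = / INR (S N) * (INR (S N) * Gn (S N) - sum_f_R0 Gn N)).
  { unfold mplus. rewrite <- (abel Gn bG) by auto. rewrite scal_sum. apply sum_eq. intros i _.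
    rewrite Hpj. unfold Rdiv. ring. }
  assert (HnN : Hn (S (S N)) = 1).
  { rewrite <- (P_total HP). unfold Hn. apply Pext. intros w; split; auto. intros _. specialize (hR w). rewrite (S_INR (S N)). nra. }
  assert (GH : forall j, Gn j <= Hn (S j)).
  { intros j. apply (P_mono HP); auto. intros w h. rewrite (S_INR j). lra. }
  assert (HG2 : forall j, Hn j <= Gn j).
  { intros j. apply (P_mono HP); auto. intros w h. lra. }
  rewrite E1, E2, HnN, GnM.
  assert (D0 : sum_f_R0 Gn N <= sum_f_R0 (fun k => Hn (S k)) N) by (apply sum_Rle; intros; apply GH).
  assert (D1 : sum_f_R0 (fun k => Hn (S k)) N <= sum_f_R0 Gn N + 1).
  { assert (sum_f_R0 (fun k => Hn (S k)) N <= sum_f_R0 (fun k => Gn (S k)) N) by (apply sum_Rle; intros; apply HG2).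
    assert (sum_f_R0 (fun k => Gn (S k) - Gn k) N = Gn (S N) - Gn O) by apply telesc.
    assert (sum_f_R0 (fun k => Gn (S k) - Gn k) N = sum_f_R0 (fun k => Gn (S k)) N - sum_f_R0 Gn N).
    { apply sum_minus_gen. }
    rewrite GnM in *. lra. }
  assert (0 < / INR (S N)) by (apply Rinv_0_lt_compat; auto).
  split; nra.
Qed.

Lemma mean_close {Omega F P} (HP : @prob_space Omega F P) (Y : Omega -> R) mu :
  measurable_rv F Y -> (forall w, 0 <= Y w <= 1) -> is_mean01 P Y mu ->
  forall eta, 0 < eta -> exists M0, forall M, (M0 <= M)%nat ->
    (1 <= M)%nat /\ mplus P Y M <= mu + eta /\ mu - eta <= mminus P Y M.
Proof.
  intros hY hR hmu eta he.
  destruct (hmu (eta / 2)) as [N0 HN0]. lra.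
  destruct (archimed_cor1 (eta / 2)) as [N1 [h1 h2]]. lra.
  exists (S (N0 + N1)). intros M hM.
  destruct (mean_approx HP Y mu hY hR hmu M ltac:(lia)) as [_ [_ [hmm hpl]]].
  destruct M as [|N]. lia.
  specialize (hpl N eq_refl). specialize (HN0 N ltac:(lia)). unfold R_dist in HN0.
  apply Rabs_def2 in HN0.
  assert (/ INR (S N) <= / INR N1).
  { apply Rinv_le_contravar. apply lt_0_INR; lia. apply le_INR; lia. }
  split. lia. split; lra.
Qed.


Fixpoint sumX {Omega} (X : nat -> nat -> Omega -> R) (b s : nat) (w : Omega) : R :=
  match s with O => 0 | S s' => sumX X b s' w + X b (S s') w end.

Lemma Npulls_S {Omega} (A : nat -> Omega -> nat) b t w :
  Npulls A b (S t) w = (Npulls A b t w + (if Nat.eqb (A (S t) w) b then 1 else 0))%nat.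
Proof. reflexivity. Qed.

Lemma Ssum_eq {Omega} (X : nat -> nat -> Omega -> R) A b t w :
  Ssum X A b t w = sumX X b (Npulls A b t w) w.
Proof.
  induction t; simpl; auto. rewrite IHt.
  destruct (Nat.eqb_spec (A (S t) w) b).
  - unfold Xobs. rewrite e. simpl. rewrite e. rewrite Nat.eqb_refl. rewrite Nat.add_1_r. simpl. ring.
  - rewrite Nat.add_0_r. ring.
Qed.

Lemma Npulls_le {Omega} (A : nat -> Omega -> nat) b t w : (Npulls A b t w <= t)%nat.
Proof. induction t; simpl; auto. destruct Nat.eqb; lia. Qed.

Lemma Npulls_mono {Omega} (A : nat -> Omega -> nat) b t t' w : (t <= t')%nat -> (Npulls A b t w <= Npulls A b t' w)%nat.
Proof. intros h; induction h; auto. simpl. lia. Qed.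

Lemma Npulls_early {Omega} K (X : nat -> nat -> Omega -> R) (A : nat -> Omega -> nat) :
  is_ucb_policy K X A -> forall b t w, (t < b)%nat -> (b <= K)%nat -> Npulls A b t w = O.
Proof.
  intros [H1 _] b t w h hb. induction t; simpl; auto. rewrite IHt by lia.
  rewrite H1 by lia. destruct (Nat.eqb_spec (S t) b); lia.
Qed.

Lemma Npulls_pos {Omega} K (X : nat -> nat -> Omega -> R) (A : nat -> Omega -> nat) :
  is_ucb_policy K X A -> forall b t w, (1 <= b <= K)%nat -> (b <= t)%nat -> (1 <= Npulls A b t w)%nat.
Proof.
  intros HA b t w hb ht. eapply Nat.le_trans. 2: apply (Npulls_mono A b b t w ht).
  destruct b. lia. simpl. destruct HA as [H1 _]. rewrite H1 by lia. rewrite Nat.eqb_refl. lia.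
Qed.

Lemma natmeas_Npulls {Omega F P} (HP : @prob_space Omega F P) (A : nat -> Omega -> nat) b :
  (forall t c, F (fun w => A t w = c)) -> forall t, natmeas F (Npulls A b t).
Proof.
  intros HA t. induction t.
  - intros k. simpl. destruct (Nat.eq_dec 0 k).
    apply (Fext F (fun _ => True)). intros; split; auto. apply (F_true HP).
    apply (Fext F (fun _ => False)). intros; split; [tauto|lia]. apply (F_false HP).
  - replace (Npulls A b (S t)) with (fun w => (Npulls A b t w + indic (fun w => A (S t) w = b) w)%nat).
    apply (natmeas_add_ind HP); auto.
    apply functional_extensionality; intros w. simpl. unfold indic.
    destruct excluded_middle_informative; destruct (Nat.eqb_spec (A (S t) w) b); auto; lia.
Qed.

Lemma cnt_mono {Omega} (E : nat -> Omega -> Prop) m m' w : (m <= m')%nat -> (cnt E m w <= cnt E m' w)%nat.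
Proof. intros h; induction h; auto. simpl. lia. Qed.

Lemma indic_true {Omega} (E : Omega -> Prop) w : E w -> indic E w = 1%nat.
Proof. unfold indic; destruct excluded_middle_informative; tauto. Qed.

Definition fexp (t : R) := ln t + 3 * ln (ln t).

Lemma pathwise {Omega} K (X : nat -> nat -> Omega -> R) (A : nat -> Omega -> nat) (HA : is_ucb_policy K X A)
  (HK : (2 <= K)%nat) a astar (Ha : (1 <= a <= K)%nat) (Hs : (1 <= astar <= K)%nat) (Hne : a <> astar)
  (mus mua gam del : R) (n u : nat) (Hu1 : (1 <= u)%nat)
  (Hdel : 0 < mus - mua - gam - del)
  (Hfmono : forall t, (K + 1 <= t <= n)%nat -> 0 <= fexp (INR t) <= fexp (INR n))
  (Hu : fexp (INR n) / (2 * INR u) <= (mus - mua - gam - del) ^ 2)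
  (lowE : nat -> nat -> Omega -> Prop) (updE : nat -> Omega -> Prop)
  (Hlow : forall s t w, (1 <= s)%nat -> sumX X astar s w < INR s * (mus - gam - sqrt (fexp (INR t) / (2 * INR s))) -> lowE s t w)
  (Hupd : forall s w, (1 <= s)%nat -> INR s * (mua + del) <= sumX X a s w -> updE s w) :
  forall w, (Npulls A a n w <= u + cnt (fun t w => (K + 1 <= t)%nat /\ exists s, (1 <= s <= t)%nat /\ lowE s t w) (S n) w
              + cnt (fun s w => (u <= s)%nat /\ updE s w) (S n) w)%nat.
Proof.
  intros w.
  set (EB := fun t w => (K + 1 <= t)%nat /\ exists s, (1 <= s <= t)%nat /\ lowE s t w).
  set (ED := fun s w => (u <= s)%nat /\ updE s w).
  assert (Cl : forall t, (t <= n)%nat -> (Npulls A a t w <= u + cnt EB (S t) w + cnt ED (Npulls A a t w) w)%nat).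
  { induction t; intros ht.
    - simpl. lia.
    - specialize (IHt ltac:(lia)). rewrite Npulls_S.
      set (N := Npulls A a t w) in *.
      assert (cB : (cnt EB (S t) w <= cnt EB (S (S t)) w)%nat) by (apply cnt_mono; lia).
      destruct (Nat.eqb_spec (A (S t) w) a) as [e|e].
      2:{ rewrite Nat.add_0_r. lia. }
      rewrite Nat.add_1_r.
      destruct (le_lt_dec u N) as [hu|hu].
      2:{ lia. }
      assert (hKt : (K + 1 <= S t)%nat).
      { destruct (le_lt_dec (K + 1) (S t)) as [h|h]; auto. exfalso.
        pose proof HA as [H1 _]. rewrite H1 in e by lia. subst a.
        assert (N = O) by (apply (Npulls_early K X A HA); lia). lia. }
      destruct HA as [H1 H2]. destruct (H2 (S t) w hKt) as [_ Hmax].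
      specialize (Hmax astar Hs). rewrite e in Hmax.
      unfold ucb_index in Hmax. replace (S t - 1)%nat with t in Hmax by lia.
      rewrite !Ssum_eq in Hmax. fold N in Hmax.
      set (Ns := Npulls A astar t w) in *.
      assert (hNs : (1 <= Ns)%nat) by (apply (Npulls_pos K X A (conj H1 H2)); lia).
      assert (hNsle : (Ns <= S t)%nat) by (pose proof (Npulls_le A astar t w); unfold Ns; lia).
      assert (hN1 : (1 <= N)%nat) by lia.
      assert (pN : 0 < INR N) by (apply lt_0_INR; lia).
      assert (pNs : 0 < INR Ns) by (apply lt_0_INR; lia).
      destruct (Rlt_dec (sumX X astar Ns w / INR Ns + sqrt (fexp (INR (S t)) / (2 * INR Ns))) (mus - gam)) as [hl|hl].
      + assert (EB (S t) w).
        { split; auto. exists Ns. split. lia. apply Hlow; auto.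
          apply (Rmult_lt_compat_l (INR Ns)) in hl; auto. unfold Rdiv in hl.
          replace (INR Ns * (sumX X astar Ns w * / INR Ns + sqrt (fexp (INR (S t)) * / (2 * INR Ns))))
            with (sumX X astar Ns w + INR Ns * sqrt (fexp (INR (S t)) * / (2 * INR Ns))) in hl by (field; lra).
          unfold Rdiv. lra. }
        assert (cnt EB (S (S t)) w = cnt EB (S t) w + 1)%nat.
        { change (cnt EB (S (S t)) w) with (cnt EB (S t) w + indic (EB (S t)) w)%nat. rewrite indic_true; auto. }
        pose proof (cnt_mono ED N (S N) w ltac:(lia)). lia.
      + assert (ED N w).
        { split; auto. apply Hupd; auto.
          assert (hf : 0 <= fexp (INR (S t)) <= fexp (INR n)) by (apply Hfmono; lia).
          assert (hs : sqrt (fexp (INR (S t)) / (2 * INR N)) <= mus - mua - gam - del).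
          { rewrite <- (sqrt_pow2 (mus - mua - gam - del)) by lra. apply sqrt_le_1_alt.
            eapply Rle_trans. 2: apply Hu.
            assert (INR u <= INR N) by (apply le_INR; lia).
            assert (0 < INR u) by (apply lt_0_INR; lia).
            unfold Rdiv. apply Rmult_le_compat; try lra.
            left; apply Rinv_0_lt_compat; lra.
            apply Rinv_le_contravar; lra. }
          assert (sumX X a N w / INR N >= mua + del) by (apply Rnot_lt_le in hl; unfold fexp in *; lra).
          unfold Rdiv in H. apply (Rmult_ge_compat_l (INR N)) in H; [|lra].
          replace (INR N * (sumX X a N w * / INR N)) with (sumX X a N w) in H by (field; lra). lra. }
        assert (cnt ED (S N) w = cnt ED N w + 1)%nat.
        { change (cnt ED (S N) w) with (cnt ED N w + indic (ED N) w)%nat. rewrite indic_true; auto. }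
        lia. }
  specialize (Cl n (le_n n)).
  assert (cnt ED (Npulls A a n w) w <= cnt ED (S n) w)%nat.
  { apply cnt_mono. pose proof (Npulls_le A a n w). lia. }
  fold EB ED. lia.
Qed.


Fixpoint idxl (b s : nat) : list (nat * nat) :=
  match s with O => nil | S s' => (b, S s') :: idxl b s' end.

Lemma idxl_in b s i : In i (idxl b s) -> fst i = b /\ (1 <= snd i <= s)%nat.
Proof. induction s; simpl; [tauto|]. intros [h|h]. subst; simpl; lia. apply IHs in h; lia. Qed.

Lemma idxl_nodup b s : NoDup (idxl b s).
Proof.
  induction s; simpl; constructor; auto. intros h. apply idxl_in in h. simpl in h. lia.
Qed.

Lemma idxl_len b s : length (idxl b s) = s.
Proof. induction s; simpl; auto. Qed.

Definition sumY {Omega} (Y : nat * nat -> Omega -> R) (l : list (nat * nat)) (w : Omega) : R :=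
  fold_right (fun i acc => Y i w + acc) 0 l.

Lemma sumY_idxl {Omega} (X : nat -> nat -> Omega -> R) b s w :
  sumY (fun i => X (fst i) (snd i)) (idxl b s) w = sumX X b s w.
Proof. induction s; simpl; auto. unfold sumY in *. simpl. rewrite IHs. ring. Qed.

Definition vplus (M : nat) (j : nat) : R := INR j / INR M.
Definition vminus (M : nat) (j : nat) : R := INR (pred j) / INR M.

Lemma atomev_exists {Omega} (Y : nat * nat -> Omega -> R) M (HM : (1 <= M)%nat) w :
  forall l, (forall i, In i l -> 0 <= Y i w <= 1) ->
  exists k, atomev Y M l k w /\ sumv (vminus M) k <= sumY Y l w <= sumv (vplus M) k.
Proof.
  assert (hM : 0 < INR M) by (apply lt_0_INR; lia).
  induction l as [|i l IH]; intros H.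
  - exists nil; simpl. unfold sumY; simpl. lra.
  - destruct (IH ltac:(intros; apply H; simpl; auto)) as [k [h1 h2]].
    destruct (atom_exists M (Y i w) (H i (or_introl eq_refl))) as [j [hj ha]].
    exists (j :: k). simpl. split; auto. unfold sumY in *. simpl.
    unfold atom in ha.
    assert (Y i w <= vplus M j) by (apply le_div_iff; lra).
    assert (vminus M j <= Y i w).
    { unfold vminus. destruct j. simpl. unfold Rdiv. rewrite Rmult_0_l. apply H; simpl; auto.
      simpl pred. rewrite S_INR in ha. apply Rnot_lt_le. intros hc.
      assert (INR M * Y i w <= INR j). { apply le_div_iff; auto. lra. } lra. }
    lra.
Qed.

Lemma exp_pow_nat x n : exp x ^ n = exp (INR n * x).
Proof.
  induction n. simpl. rewrite Rmult_0_l, exp_0; auto.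
  simpl pow. rewrite IHn. rewrite <- exp_plus. f_equal. rewrite S_INR. ring.
Qed.

Lemma mean_bounds (p v : nat -> R) M : (forall j, 0 <= p j) -> sum_f_R0 p M = 1 ->
  (forall j, (j <= M)%nat -> 0 <= v j <= 1) -> 0 <= sum_f_R0 (fun j => p j * v j) M <= 1.
Proof.
  intros hp hs hv. rewrite <- hs. split.
  apply sum_nonneg_le. intros j hj. specialize (hv j hj). specialize (hp j). nra.
  apply sum_Rle. intros j hj. specialize (hv j hj). specialize (hp j). nra.
Qed.

Lemma vplus_range M (HM : (1 <= M)%nat) j : (j <= M)%nat -> 0 <= vplus M j <= 1.
Proof.
  intros h. unfold vplus. assert (hM : 0 < INR M) by (apply lt_0_INR; lia).
  assert (INR j <= INR M) by (apply le_INR; auto). pose proof (pos_INR j).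
  split. unfold Rdiv; apply Rmult_le_pos; auto. left; apply Rinv_0_lt_compat; auto.
  replace 1 with (INR M / INR M) by (field; lra). unfold Rdiv. apply Rmult_le_compat_r; auto.
  left; apply Rinv_0_lt_compat; auto.
Qed.

Lemma vminus_range M (HM : (1 <= M)%nat) j : (j <= M)%nat -> 0 <= vminus M j <= 1.
Proof.
  intros h. unfold vminus. assert (hM : 0 < INR M) by (apply lt_0_INR; lia).
  assert (INR (pred j) <= INR M) by (apply le_INR; lia). pose proof (pos_INR (pred j)).
  split. unfold Rdiv; apply Rmult_le_pos; auto. left; apply Rinv_0_lt_compat; auto.
  replace 1 with (INR M / INR M) by (field; lra). unfold Rdiv. apply Rmult_le_compat_r; auto.
  left; apply Rinv_0_lt_compat; auto.
Qed.

Lemma arm_hyps {Omega F P} (HP : @prob_space Omega F P) K (X : nat -> nat -> Omega -> R)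
  (Hmeas : forall b s, (1 <= b <= K)%nat -> (1 <= s)%nat -> measurable_rv F (X b s))
  (Hrange : forall b s w, (1 <= b <= K)%nat -> (1 <= s)%nat -> 0 <= X b s w <= 1)
  (Hindep : indep_family P (fun bs : nat * nat => (1 <= fst bs <= K)%nat /\ (1 <= snd bs)%nat)
     (fun bs : nat * nat => X (fst bs) (snd bs)))
  (Hiid : forall b s, (1 <= b <= K)%nat -> (1 <= s)%nat -> same_law P (X b s) (X b 1%nat))
  b (Hb : (1 <= b <= K)%nat) s :
  let Y := fun i : nat * nat => X (fst i) (snd i) in
  let L := idxl b s in
  (forall i, In i L -> measurable_rv F (Y i)) /\
  (forall i w, In i L -> 0 <= Y i w <= 1) /\
  (forall l0 c, NoDup l0 -> incl l0 L ->
     P (fun w => Forall (fun i => Y i w <= c i) l0) = fold_right Rmult 1 (map (fun i => P (fun w => Y i w <= c i)) l0)) /\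
  (forall i c, In i L -> P (fun w => Y i w <= c) = P (fun w => X b 1%nat w <= c)).
Proof.
  intros Y L. split; [|split; [|split]].
  - intros i hi. apply idxl_in in hi. unfold Y. destruct hi as [e h]. rewrite e. apply Hmeas; lia.
  - intros i w hi. apply idxl_in in hi. unfold Y. destruct hi as [e h]. rewrite e. apply Hrange; lia.
  - intros l0 c hnd hinc. apply Hindep; auto. rewrite Forall_forall. intros x hx.
    apply hinc in hx. apply idxl_in in hx. lia.
  - intros i c hi. apply idxl_in in hi. unfold Y. destruct hi as [e h]. rewrite e. apply Hiid; lia.
Qed.


Lemma arm_chernoff {Omega F P} (HP : @prob_space Omega F P) K (X : nat -> nat -> Omega -> R)
  (Hmeas : forall b s, (1 <= b <= K)%nat -> (1 <= s)%nat -> measurable_rv F (X b s))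
  (Hrange : forall b s w, (1 <= b <= K)%nat -> (1 <= s)%nat -> 0 <= X b s w <= 1)
  (Hindep : indep_family P (fun bs : nat * nat => (1 <= fst bs <= K)%nat /\ (1 <= snd bs)%nat)
     (fun bs : nat * nat => X (fst bs) (snd bs)))
  (Hiid : forall b s, (1 <= b <= K)%nat -> (1 <= s)%nat -> same_law P (X b s) (X b 1%nat))
  b (Hb : (1 <= b <= K)%nat) mu (Hmu : is_mean01 P (X b 1%nat) mu) M (HM : (1 <= M)%nat)
  (v : nat -> R) (Hv : forall j, (j <= M)%nat -> 0 <= v j <= 1) th c0 g
  (Hg : forall k, g k -> th * c0 <= th * sumv v k) s :
  P (Ev (fun i : nat * nat => X (fst i) (snd i)) M (idxl b s) g) <=
  exp (- th * c0 + INR s * (th * sum_f_R0 (fun j => pj P (X b 1%nat) M j * v j) M + th ^ 2 / 8)).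
Proof.
  destruct (arm_hyps HP K X Hmeas Hrange Hindep Hiid b Hb s) as [h1 [h2 [h3 h4]]].
  assert (hY1 : measurable_rv F (X b 1%nat)) by (apply Hmeas; lia).
  assert (hR1 : forall w, 0 <= X b 1%nat w <= 1) by (intros; apply Hrange; lia).
  destruct (mean_approx HP (X b 1%nat) mu hY1 hR1 Hmu M HM) as [hp0 [hp1 _]].
  eapply Rle_trans.
  apply (chernoff HP (fun i : nat * nat => X (fst i) (snd i)) (idxl b s) M HM h1 h2 h3
           (fun c => P (fun w => X b 1%nat w <= c)) h4 (pj P (X b 1%nat) M) eq_refl
           (fun j _ => hp0 j) hp1 v Hv th c0 g Hg (idxl b s) (idxl_nodup b s) (fun x h => h)).
  rewrite idxl_len.
  set (m := sum_f_R0 (fun j => pj P (X b 1%nat) M j * v j) M).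
  assert (hm : 0 <= m <= 1) by (apply mean_bounds; auto).
  assert (hb : 0 <= 1 - m + m * exp th) by (pose proof (exp_pos th); nra).
  eapply Rle_trans. apply Rmult_le_compat_l. left; apply exp_pos.
  apply pow_incr. split. exact hb. apply hoeffding_lemma; auto.
  rewrite exp_pow_nat, <- exp_plus. right. f_equal.
Qed.

Lemma upd_prob {Omega F P} (HP : @prob_space Omega F P) K (X : nat -> nat -> Omega -> R)
  (Hmeas : forall b s, (1 <= b <= K)%nat -> (1 <= s)%nat -> measurable_rv F (X b s))
  (Hrange : forall b s w, (1 <= b <= K)%nat -> (1 <= s)%nat -> 0 <= X b s w <= 1)
  (Hindep : indep_family P (fun bs : nat * nat => (1 <= fst bs <= K)%nat /\ (1 <= snd bs)%nat)
     (fun bs : nat * nat => X (fst bs) (snd bs)))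
  (Hiid : forall b s, (1 <= b <= K)%nat -> (1 <= s)%nat -> same_law P (X b s) (X b 1%nat))
  b (Hb : (1 <= b <= K)%nat) mu (Hmu : is_mean01 P (X b 1%nat) mu) M (HM : (1 <= M)%nat)
  del (Hdel : 0 < del) (Hm : mplus P (X b 1%nat) M <= mu + del / 2) s :
  P (Ev (fun i : nat * nat => X (fst i) (snd i)) M (idxl b s) (fun k => INR s * (mu + del) <= sumv (vplus M) k))
  <= exp (- (INR s * del ^ 2 / 2)).
Proof.
  eapply Rle_trans.
  apply (arm_chernoff HP K X Hmeas Hrange Hindep Hiid b Hb mu Hmu M HM (vplus M) (vplus_range M HM) (2 * del) (INR s * (mu + del))).
  intros k hk. apply Rmult_le_compat_l; lra.
  apply exp_mono. change (sum_f_R0 (fun j => pj P (X b 1%nat) M j * vplus M j) M) with (mplus P (X b 1%nat) M).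
  pose proof (pos_INR s).
  assert (INR s * del * (mplus P (X b 1%nat) M - (mu + del / 2)) <= 0).
  { assert (0 <= INR s * del) by nra. nra. }
  simpl. nra.
Qed.

Lemma low_prob {Omega F P} (HP : @prob_space Omega F P) K (X : nat -> nat -> Omega -> R)
  (Hmeas : forall b s, (1 <= b <= K)%nat -> (1 <= s)%nat -> measurable_rv F (X b s))
  (Hrange : forall b s w, (1 <= b <= K)%nat -> (1 <= s)%nat -> 0 <= X b s w <= 1)
  (Hindep : indep_family P (fun bs : nat * nat => (1 <= fst bs <= K)%nat /\ (1 <= snd bs)%nat)
     (fun bs : nat * nat => X (fst bs) (snd bs)))
  (Hiid : forall b s, (1 <= b <= K)%nat -> (1 <= s)%nat -> same_law P (X b s) (X b 1%nat))
  b (Hb : (1 <= b <= K)%nat) mu (Hmu : is_mean01 P (X b 1%nat) mu) M (HM : (1 <= M)%nat)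
  gam (Hgam : 0 < gam) (Hm : mu - gam / 2 <= mminus P (X b 1%nat) M) s (Hs : (1 <= s)%nat) f (Hf : 0 <= f) :
  P (Ev (fun i : nat * nat => X (fst i) (snd i)) M (idxl b s)
       (fun k => sumv (vminus M) k <= INR s * (mu - gam - sqrt (f / (2 * INR s)))))
  <= exp (- (INR s * gam ^ 2 / 2) - f).
Proof.
  set (r := sqrt (f / (2 * INR s))).
  assert (hs : 1 <= INR s) by (apply (le_INR 1); auto).
  assert (hr : 0 <= r) by apply sqrt_pos.
  assert (hr2 : r * r = f / (2 * INR s)) by (apply sqrt_sqrt; unfold Rdiv; apply Rmult_le_pos; auto; left; apply Rinv_0_lt_compat; lra).
  assert (hr3 : 2 * INR s * (r * r) = f) by (rewrite hr2; field; lra).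
  eapply Rle_trans.
  apply (arm_chernoff HP K X Hmeas Hrange Hindep Hiid b Hb mu Hmu M HM (vminus M) (vminus_range M HM)
           (- (4 * (gam / 2 + r))) (INR s * (mu - gam - r))).
  intros k hk. fold r in hk. assert (0 <= 4 * (gam / 2 + r)) by lra. nra.
  apply exp_mono. change (sum_f_R0 (fun j => pj P (X b 1%nat) M j * vminus M j) M) with (mminus P (X b 1%nat) M).
  set (x := gam / 2 + r). assert (0 <= x) by (unfold x; lra).
  assert (e : - - (4 * x) * (INR s * (mu - gam - r)) + INR s * (- (4 * x) * mminus P (X b 1%nat) M + (- (4 * x)) ^ 2 / 8)
     = 4 * x * INR s * (mu - gam - r - mminus P (X b 1%nat) M) + 2 * INR s * x * x) by (unfold pow; field).
  rewrite e.
  assert (4 * x * INR s * (mu - gam - r - mminus P (X b 1%nat) M) <= 4 * x * INR s * (- x)).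
  { apply Rmult_le_compat_l. nra. unfold x; lra. }
  assert (2 * INR s * x * x >= 2 * INR s * (gam ^ 2 / 4 + r * r)).
  { unfold x. assert (0 <= gam * r) by nra. nra. }
  nra.
Qed.


Lemma rsum_sum f n : rsum f (S n) = sum_f_R0 f n.
Proof. induction n. simpl; ring. change (rsum f (S (S n))) with (rsum f (S n) + f (S n)). rewrite IHn. simpl. ring. Qed.

Lemma rsum_le f g n : (forall i, (i < n)%nat -> f i <= g i) -> rsum f n <= rsum g n.
Proof. induction n; intros H; simpl. lra. assert (f n <= g n) by (apply H; lia). assert (rsum f n <= rsum g n) by (apply IHn; intros; apply H; lia). lra. Qed.

Lemma geom_le q n : 0 <= q < 1 -> sum_f_R0 (fun i => q ^ i) n <= / (1 - q).
Proof.
  intros h. rewrite tech3 by lra. unfold Rdiv. rewrite <- (Rmult_1_l (/ (1 - q))) at 2. apply Rmult_le_compat_r. left; apply Rinv_0_lt_compat; lra.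
  assert (0 <= q ^ S n) by (apply pow_le; lra). lra.
Qed.

Lemma ln_le x y : 0 < x -> x <= y -> ln x <= ln y.
Proof. intros h [h'|h']. left; apply ln_increasing; auto. subst; lra. Qed.

Lemma ln_ge_1 x : 3 <= x -> 1 <= ln x.
Proof.
  intros h. rewrite <- (ln_exp 1). apply ln_le. apply exp_pos. pose proof exp_le_3. lra.
Qed.

Lemma fexp_props x y : 3 <= x -> x <= y -> 0 <= fexp x <= fexp y.
Proof.
  intros hx hy. unfold fexp. pose proof (ln_ge_1 x hx). pose proof (ln_ge_1 y ltac:(lra)).
  assert (0 <= ln (ln x)) by (rewrite <- ln_1; apply ln_le; lra).
  assert (ln x <= ln y) by (apply ln_le; lra).
  assert (ln (ln x) <= ln (ln y)) by (apply ln_le; lra).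
  lra.
Qed.

Lemma exp_neg_fexp x : 3 <= x -> exp (- fexp x) <= / (x * ln x).
Proof.
  intros hx. unfold fexp. pose proof (ln_ge_1 x hx).
  replace (- (ln x + 3 * ln (ln x))) with (- ln x + - (3 * ln (ln x))) by ring.
  rewrite exp_plus. rewrite exp_Ropp, exp_Ropp. rewrite exp_ln by lra.
  replace (3 * ln (ln x)) with (ln (ln x) + ln (ln x) + ln (ln x)) by ring.
  rewrite !exp_plus, exp_ln by lra.
  rewrite <- Rinv_mult. apply Rinv_le_contravar. assert (0 < ln x) by lra. apply Rmult_lt_0_compat; lra. assert (ln x <= ln x * ln x * ln x) by nra. apply Rmult_le_compat_l; lra.
Qed.

Lemma log_step x : 1 <= x -> / (x + 1) <= ln (x + 1) - ln x.
Proof.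
  intros hx.
  set (z := x / (x + 1)).
  assert (hz : 0 < z) by (unfold z; apply Rdiv_lt_0_compat; lra).
  replace x with (z * (x + 1)) at 3 by (unfold z; field; lra).
  rewrite ln_mult by lra.
  assert (h := exp_ge_1plus (ln z)). rewrite exp_ln in h by auto.
  assert (1 - z = / (x + 1)) by (unfold z; field; lra). lra.
Qed.

Lemma harm n : (1 <= n)%nat -> sum_f_R0 (fun t => if Nat.leb 1 t then / INR t else 0) n <= 1 + ln (INR n).
Proof.
  intros h. induction h.
  - simpl. rewrite ln_1. lra.
  - rewrite tech5. replace (Nat.leb 1 (S m)) with true by (symmetry; apply Nat.leb_le; lia).
    assert (1 <= INR m) by (apply (le_INR 1); auto).
    pose proof (log_step (INR m) H). rewrite S_INR. lra.
Qed.

Lemma count_lt T n : sum_f_R0 (fun t => if Nat.ltb t T then 1 else 0) n <= INR T.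
Proof.
  assert (forall n, sum_f_R0 (fun t => if Nat.ltb t T then 1 else 0) n = INR (Nat.min (S n) T)).
  { induction n0.
    - destruct T; simpl; reflexivity.
    - rewrite tech5. rewrite IHn0. destruct (Nat.ltb_spec (S n0) T).
      + replace (Nat.min (S (S n0)) T) with (S (Nat.min (S n0) T)) by lia. rewrite S_INR. auto.
      + replace (Nat.min (S (S n0)) T) with (Nat.min (S n0) T) by lia. ring. }
  rewrite H. apply le_INR. lia.
Qed.

Lemma sum_scal_l c f n : sum_f_R0 (fun i => c * f i) n = c * sum_f_R0 f n.
Proof. induction n; simpl. auto. rewrite IHn. ring. Qed.

Lemma Bsum (b : nat -> R) Cg eta T0 n : 0 <= Cg -> 0 < eta -> Cg / eta <= ln (INR T0) -> (1 <= n)%nat -> (1 <= T0)%nat ->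
  (forall t, b t <= if Nat.leb 3 t then Cg * exp (- fexp (INR t)) else 0) ->
  sum_f_R0 b n <= Cg * INR T0 + eta * (1 + ln (INR n)).
Proof.
  intros hC he hT hn hT0 hb.
  eapply Rle_trans. apply (sum_Rle b (fun t => Cg * (if Nat.ltb t T0 then 1 else 0) + eta * (if Nat.leb 1 t then / INR t else 0))).
  - intros t _. eapply Rle_trans. apply hb. destruct (Nat.leb_spec 3 t) as [h|h].
    2:{ assert (0 <= Cg * (if Nat.ltb t T0 then 1 else 0)) by (destruct Nat.ltb; lra).
        assert (0 <= eta * (if Nat.leb 1 t then / INR t else 0)).
        { destruct Nat.leb. apply Rmult_le_pos. lra. destruct t. simpl. rewrite Rinv_0. lra. left; apply Rinv_0_lt_compat, lt_0_INR; lia. lra. }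
        lra. }
    replace (Nat.leb 1 t) with true by (symmetry; apply Nat.leb_le; lia).
    assert (ht : 3 <= INR t) by (replace 3 with (INR 3) by (simpl; ring); apply le_INR; auto).
    pose proof (exp_neg_fexp (INR t) ht) as he2. pose proof (ln_ge_1 (INR t) ht) as hl.
    assert (0 < / (INR t * ln (INR t))) by (apply Rinv_0_lt_compat; nra).
    assert (0 <= eta * / INR t) by (apply Rmult_le_pos; [lra| left; apply Rinv_0_lt_compat; lra]).
    destruct (Nat.ltb_spec t T0) as [h2|h2].
    + assert (/ (INR t * ln (INR t)) <= 1).
      { rewrite <- Rinv_1. apply Rinv_le_contravar. lra. nra. }
      assert (exp (- fexp (INR t)) <= 1) by lra. nra.
    + assert (hT2 : ln (INR T0) <= ln (INR t)).
      { apply ln_le. apply lt_0_INR; lia. apply le_INR; auto. }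
      assert (Cg <= eta * ln (INR t)).
      { assert (Cg / eta <= ln (INR t)) by lra. unfold Rdiv in H1.
        apply (Rmult_le_compat_l eta) in H1; [|lra]. replace (eta * (Cg * / eta)) with Cg in H1 by (field; lra). lra. }
      assert (Cg * exp (- fexp (INR t)) <= Cg * / (INR t * ln (INR t))) by (apply Rmult_le_compat_l; auto).
      assert (Cg * / (INR t * ln (INR t)) <= eta * / INR t).
      { replace (Cg * / (INR t * ln (INR t))) with (Cg / ln (INR t) * / INR t) by (field; split; lra).
        apply Rmult_le_compat_r. left; apply Rinv_0_lt_compat; lra.
        unfold Rdiv. apply (Rmult_le_reg_r (ln (INR t))). lra. rewrite Rmult_assoc, Rinv_l by lra. lra. }
      lra.
  - rewrite sum_plus. rewrite !sum_scal_l.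
    assert (h1 := count_lt T0 n). assert (h2 := harm n hn).
    apply Rplus_le_compat; apply Rmult_le_compat_l; lra.
Qed.


Lemma indic_ext {Omega} (E E' : Omega -> Prop) w : (E w <-> E' w) -> indic E w = indic E' w.
Proof. intros h. unfold indic. destruct (excluded_middle_informative (E w)); destruct (excluded_middle_informative (E' w)); tauto. Qed.

Lemma cnt_ext {Omega} (E E' : nat -> Omega -> Prop) m w : (forall i, (i < m)%nat -> (E i w <-> E' i w)) -> cnt E m w = cnt E' m w.
Proof. induction m; intros h; simpl; auto. rewrite IHm by (intros; apply h; lia). rewrite (indic_ext (E m) (E' m)); auto. Qed.

Definition comb {Omega} (E1 E2 : nat -> Omega -> Prop) m1 (i : nat) : Omega -> Prop :=
  if Nat.ltb i m1 then E1 i else E2 (i - m1)%nat.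

Lemma cnt_app {Omega} (E1 E2 : nat -> Omega -> Prop) m1 m2 w :
  cnt (comb E1 E2 m1) (m1 + m2) w = (cnt E1 m1 w + cnt E2 m2 w)%nat.
Proof.
  induction m2.
  - rewrite Nat.add_0_r. rewrite (cnt_ext _ E1). simpl; lia.
    intros i hi. unfold comb. replace (Nat.ltb i m1) with true by (symmetry; apply Nat.ltb_lt; auto). tauto.
  - replace (m1 + S m2)%nat with (S (m1 + m2)) by lia. simpl. rewrite IHm2.
    unfold comb at 1. replace (Nat.ltb (m1 + m2) m1) with false by (symmetry; apply Nat.ltb_ge; lia).
    replace (m1 + m2 - m1)%nat with m2 by lia. lia.
Qed.

Lemma rsum_ext f g m : (forall i, (i < m)%nat -> f i = g i) -> rsum f m = rsum g m.
Proof. induction m; intros h; simpl; auto. rewrite IHm by (intros; apply h; lia). rewrite h; auto. Qed.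

Lemma rsum_comb {Omega} (P : (Omega -> Prop) -> R) (E1 E2 : nat -> Omega -> Prop) m1 m2 :
  rsum (fun i => P (comb E1 E2 m1 i)) (m1 + m2) = rsum (fun i => P (E1 i)) m1 + rsum (fun i => P (E2 i)) m2.
Proof.
  induction m2.
  - rewrite Nat.add_0_r. rewrite (rsum_ext _ (fun i => P (E1 i))). simpl; ring.
    intros i hi. unfold comb. replace (Nat.ltb i m1) with true by (symmetry; apply Nat.ltb_lt; auto). auto.
  - replace (m1 + S m2)%nat with (S (m1 + m2)) by lia. simpl. rewrite IHm2.
    unfold comb at 1. replace (Nat.ltb (m1 + m2) m1) with false by (symmetry; apply Nat.ltb_ge; lia).
    replace (m1 + m2 - m1)%nat with m2 by lia. ring.
Qed.

Lemma F_const {Omega F P} (HP : @prob_space Omega F P) (Q : Prop) : F (fun _ : Omega => Q).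
Proof.
  destruct (classic Q). apply (Fext F (fun _ => True)). intros; tauto. apply (F_true HP).
  apply (Fext F (fun _ => False)). intros; tauto. apply (F_false HP).
Qed.

Lemma nat_ceil x : 0 < x -> exists u : nat, (1 <= u)%nat /\ x <= INR u <= x + 1.
Proof.
  intros hx. destruct (INR_unbounded x) as [N hN].
  destruct (ceil_exists N x) as [j [hj1 hj2]]. lra.
  exists j. split; [|lra]. destruct j. simpl in hj2. lra. lia.
Qed.


Theorem proposition1
  (Omega : Type) (F : (Omega -> Prop) -> Prop) (P : (Omega -> Prop) -> R)
  (HP : prob_space Omega F P)
  (K : nat) (HK : (2 <= K)%nat)
  (X : nat -> nat -> Omega -> R) (mu : nat -> R)
  (Hmeas : forall b s, (1 <= b <= K)%nat -> (1 <= s)%nat -> measurable_rv F (X b s))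
  (Hrange : forall b s w, (1 <= b <= K)%nat -> (1 <= s)%nat -> 0 <= X b s w <= 1)
  (Hindep : indep_family P
     (fun bs : nat * nat => (1 <= fst bs <= K)%nat /\ (1 <= snd bs)%nat)
     (fun bs : nat * nat => X (fst bs) (snd bs)))
  (Hiid : forall b s, (1 <= b <= K)%nat -> (1 <= s)%nat -> same_law P (X b s) (X b 1%nat))
  (Hmean : forall b, (1 <= b <= K)%nat -> is_mean01 P (X b 1%nat) (mu b))
  (astar a : nat)
  (Hastar : (1 <= astar <= K)%nat)
  (Hopt : forall b, (1 <= b <= K)%nat -> mu b <= mu astar)
  (Ha : (1 <= a <= K)%nat) (Hsub : mu a < mu astar)
  (A : nat -> Omega -> nat)
  (HAmeas : forall t b, F (fun w => A t w = b))
  (HA : is_ucb_policy K X A) :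
  exists C1 : R, 0 < C1 /\
  forall eps : R, 0 < eps ->
  exists C2 beta : R, 0 < C2 /\ 0 < beta /\
  forall n : nat, (3 <= n)%nat ->
    expect_nat P n (Npulls A a n)
    <= ln (INR n) / (2 * (mu a - mu astar) ^ 2) * (1 + eps)
       + C1 * ln (ln (INR n))
       + C2 / Rpower (INR n) beta.
Proof.
  set (Dl := mu astar - mu a). assert (hD : 0 < Dl) by (unfold Dl; lra).
  assert (hD2 : 0 < Dl ^ 2) by (apply pow_lt; lra).
  exists (3 / Dl ^ 2). split. apply Rdiv_lt_0_compat; lra.
  intros eps heps.
  set (e' := Rmin eps 1).
  assert (he1 : 0 < e') by (unfold e'; apply Rmin_glb_lt; lra).
  assert (he2 : e' <= 1) by (unfold e'; apply Rmin_r).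
  assert (he3 : e' <= eps) by (unfold e'; apply Rmin_l).
  set (del := Dl * e' / 20). assert (hdel : 0 < del) by (unfold del; nra).
  assert (hY1a : measurable_rv F (X a 1%nat)) by (apply Hmeas; lia).
  assert (hR1a : forall w, 0 <= X a 1%nat w <= 1) by (intros; apply Hrange; lia).
  assert (hY1s : measurable_rv F (X astar 1%nat)) by (apply Hmeas; lia).
  assert (hR1s : forall w, 0 <= X astar 1%nat w <= 1) by (intros; apply Hrange; lia).
  destruct (mean_close HP (X a 1%nat) (mu a) hY1a hR1a (Hmean a Ha) (del / 2) ltac:(lra)) as [Ma HMa].
  destruct (mean_close HP (X astar 1%nat) (mu astar) hY1s hR1s (Hmean astar Hastar) (del / 2) ltac:(lra)) as [Ms HMs].
  set (M := S (Ma + Ms)).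
  destruct (HMa M ltac:(unfold M; lia)) as [HM [Hma _]].
  destruct (HMs M ltac:(unfold M; lia)) as [_ [_ Hms]].
  set (qd := exp (- (del ^ 2 / 2))).
  assert (hqd : 0 < qd < 1).
  { split. apply exp_pos. unfold qd. rewrite <- exp_0. apply exp_increasing. nra. }
  set (Cd := / (1 - qd)). assert (hCd : 0 < Cd) by (apply Rinv_0_lt_compat; lra).
  set (eta := e' / (8 * Dl ^ 2)). assert (heta : 0 < eta) by (unfold eta; apply Rdiv_lt_0_compat; lra).
  destruct (INR_unbounded (exp (Cd / eta))) as [T0' hT0'].
  set (T0 := S T0').
  assert (hT0 : Cd / eta <= ln (INR T0)).
  { rewrite <- (ln_exp (Cd / eta)). apply ln_le. apply exp_pos. unfold T0. rewrite S_INR. lra. }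
  set (K0 := 1 + Cd * INR T0 + eta + Cd).
  assert (hK0 : 0 < K0) by (unfold K0; pose proof (pos_INR T0); nra).
  destruct (INR_unbounded (exp (8 * Dl ^ 2 * K0 / e'))) as [n0 hn0].
  exists (K0 * INR n0 + 1), 1. split. pose proof (pos_INR n0); nra. split. lra.
  intros n hn.
  assert (hn3 : 3 <= INR n) by (replace 3 with (INR 3) by (simpl; ring); apply le_INR; auto).
  assert (hL : 1 <= ln (INR n)) by (apply ln_ge_1; auto).
  assert (hLL : 0 <= ln (ln (INR n))) by (rewrite <- ln_1; apply ln_le; lra).
  assert (hf : fexp (INR n) = ln (INR n) + 3 * ln (ln (INR n))) by reflexivity.
  set (Dp := Dl - del - del).
  assert (hDp : Dp = Dl * (1 - e' / 10)) by (unfold Dp, del; field).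
  assert (hDp0 : 0 < Dp) by (rewrite hDp; nra).
  destruct (nat_ceil (fexp (INR n) / (2 * Dp ^ 2))) as [u [hu1 [hu2 hu3]]].
  { apply Rdiv_lt_0_compat. rewrite hf; lra. nra. }
  assert (hne : a <> astar) by (intro e; subst; lra).
  set (Y := fun i : nat * nat => X (fst i) (snd i)).
  set (lowE := fun s t w => Ev Y M (idxl astar s) (fun k => sumv (vminus M) k <= INR s * (mu astar - del - sqrt (fexp (INR t) / (2 * INR s)))) w).
  set (updE := fun s w => Ev Y M (idxl a s) (fun k => INR s * (mu a + del) <= sumv (vplus M) k) w).
  assert (Hu : fexp (INR n) / (2 * INR u) <= (mu astar - mu a - del - del) ^ 2).
  { fold Dl. fold Dp. assert (0 < INR u) by (apply lt_0_INR; lia).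
    assert (fexp (INR n) <= INR u * (2 * Dp ^ 2)).
    { unfold Rdiv in hu2. apply (Rmult_le_compat_r (2 * Dp ^ 2)) in hu2; [|nra].
      replace (fexp (INR n) * / (2 * Dp ^ 2) * (2 * Dp ^ 2)) with (fexp (INR n)) in hu2 by (field; lra). lra. }
    unfold Rdiv. apply (Rmult_le_reg_r (2 * INR u)). lra.
    replace (fexp (INR n) * / (2 * INR u) * (2 * INR u)) with (fexp (INR n)) by (field; lra). nra. }
  assert (Hpath := pathwise K X A HA HK a astar Ha Hastar hne (mu astar) (mu a) del del n u hu1
     ltac:(fold Dl; fold Dp; lra)
     ltac:(intros t ht; apply fexp_props; [replace 3 with (INR 3) by (simpl; ring); apply le_INR; lia | apply le_INR; lia])
     Hu lowE updE).
  assert (Hlow : forall s t w, (1 <= s)%nat -> sumX X astar s w < INR s * (mu astar - del - sqrt (fexp (INR t) / (2 * INR s))) -> lowE s t w).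
  { intros s t w hs hsum.
    destruct (arm_hyps HP K X Hmeas Hrange Hindep Hiid astar Hastar s) as [_ [h2 _]].
    destruct (atomev_exists Y M HM w (idxl astar s) (fun i hi => h2 i w hi)) as [k [hk1 [hk2 hk3]]].
    exists k. split; auto. unfold Y in hk2. rewrite sumY_idxl in hk2. lra. }
  assert (Hupd : forall s w, (1 <= s)%nat -> INR s * (mu a + del) <= sumX X a s w -> updE s w).
  { intros s w hs hsum.
    destruct (arm_hyps HP K X Hmeas Hrange Hindep Hiid a Ha s) as [_ [h2 _]].
    destruct (atomev_exists Y M HM w (idxl a s) (fun i hi => h2 i w hi)) as [k [hk1 [hk2 hk3]]].
    exists k. split; auto. unfold Y in hk3. rewrite sumY_idxl in hk3. lra. }
  specialize (Hpath Hlow Hupd).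
  set (EB := fun t w => (K + 1 <= t)%nat /\ exists s, (1 <= s <= t)%nat /\ lowE s t w) in Hpath.
  set (ED := fun s w => (u <= s)%nat /\ updE s w) in Hpath.
  assert (FlowE : forall s t, F (lowE s t)).
  { intros s t. destruct (arm_hyps HP K X Hmeas Hrange Hindep Hiid astar Hastar s) as [h1 [h2 _]].
    apply (F_Ev HP Y M HM (idxl astar s) h1 h2). }
  assert (FupdE : forall s, F (updE s)).
  { intros s. destruct (arm_hyps HP K X Hmeas Hrange Hindep Hiid a Ha s) as [h1 [h2 _]].
    apply (F_Ev HP Y M HM (idxl a s) h1 h2). }
  assert (FEB : forall t, F (EB t)).
  { intros t. apply (F_and HP). apply (F_const HP).
    apply (Fext F (fun w => exists s, (s <= t)%nat /\ ((1 <= s)%nat /\ lowE s t w))).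
    intros w; split; intros [s hs]; exists s; tauto.
    apply (F_exists_le HP). intros s _. apply (F_and HP). apply (F_const HP). apply FlowE. }
  assert (FED : forall s, F (ED s)).
  { intros s. apply (F_and HP). apply (F_const HP). apply FupdE. }
  assert (Fcomb : forall i, F (comb EB ED (S n) i)).
  { intros i. unfold comb. destruct Nat.ltb; auto. }
  assert (Hexp : expect_nat P n (Npulls A a n) <= INR u + rsum (fun i => P (EB i)) (S n) + rsum (fun i => P (ED i)) (S n)).
  { rewrite Rplus_assoc, <- rsum_comb. apply (expect_bound HP); auto.
    apply (natmeas_Npulls HP); auto. intros w; apply Npulls_le.
    intros w. rewrite cnt_app. specialize (Hpath w). lia. }
  assert (BD : rsum (fun i => P (ED i)) (S n) <= Cd).
  { rewrite rsum_sum. eapply Rle_trans. 2: apply (geom_le qd n); lra.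
    apply sum_Rle. intros s _.
    eapply Rle_trans. apply (P_mono HP (ED s) (updE s)); auto. intros w [_ h]; auto.
    eapply Rle_trans. apply (upd_prob HP K X Hmeas Hrange Hindep Hiid a Ha (mu a) (Hmean a Ha) M HM del hdel Hma s).
    unfold qd. rewrite exp_pow_nat. right. f_equal. field. }
  assert (BB : rsum (fun i => P (EB i)) (S n) <= Cd * INR T0 + eta * (1 + ln (INR n))).
  { rewrite rsum_sum. apply Bsum; auto. lra. lia. unfold T0; lia.
    intros t. destruct (le_lt_dec (K + 1) t) as [ht|ht].
    - replace (Nat.leb 3 t) with true by (symmetry; apply Nat.leb_le; lia).
      rewrite (Pext P (EB t) (fun w => exists s, (s <= t)%nat /\ ((1 <= s)%nat /\ lowE s t w))).
      2:{ intros w; unfold EB; split. intros [_ [s hs]]; exists s; tauto. intros [s hs]; split; auto. exists s; tauto. }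
      eapply Rle_trans. apply (P_union_bound HP). intros s. apply (F_and HP). apply (F_const HP). apply FlowE.
      assert (ht3 : 3 <= INR t) by (replace 3 with (INR 3) by (simpl; ring); apply le_INR; lia).
      assert (hft : 0 <= fexp (INR t)) by (apply (fexp_props (INR t) (INR t)); lra).
      eapply Rle_trans. apply (sum_Rle _ (fun s => qd ^ s * exp (- fexp (INR t)))).
      + intros s _. destruct s.
        * rewrite (Pext P _ (fun _ => False)). rewrite (P_false HP). simpl. pose proof (exp_pos (- fexp (INR t))). lra.
          intros w; split; [intros [h _]; lia| tauto].
        * eapply Rle_trans. apply (P_mono HP _ (lowE (S s) t)). apply (F_and HP). apply (F_const HP). apply FlowE. apply FlowE.
          intros w [_ h]; auto.
          eapply Rle_trans. apply (low_prob HP K X Hmeas Hrange Hindep Hiid astar Hastar (mu astar) (Hmean astar Hastar) M HM del hdel Hms (S s) ltac:(lia) (fexp (INR t)) hft).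
          unfold qd. rewrite exp_pow_nat, <- exp_plus. right. f_equal. field.
      + rewrite <- scal_sum. rewrite (Rmult_comm Cd). apply Rmult_le_compat_l. left; apply exp_pos. apply geom_le; lra.
    - rewrite (Pext P (EB t) (fun _ => False)). rewrite (P_false HP).
      destruct (Nat.leb 3 t). pose proof (exp_pos (- fexp (INR t))). nra. lra.
      intros w; split; [intros [h _]; lia| tauto]. }
  rewrite Rpower_1 by lra.
  replace ((mu a - mu astar) ^ 2) with (Dl ^ 2) by (unfold Dl; ring).
  set (LL := ln (ln (INR n))) in *. set (L := ln (INR n)) in *.
  set (Q := L / (2 * Dl ^ 2)).
  assert (hQ : 0 <= Q) by (unfold Q; apply Rmult_le_pos; [lra| left; apply Rinv_0_lt_compat; lra]).
  set (y := e' / 10).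
  assert (hy : 0 < y <= 1 / 10) by (unfold y; split; lra).
  assert (hinv : / Dp ^ 2 = / Dl ^ 2 * / (1 - y) ^ 2).
  { rewrite hDp. unfold y. field. split; lra. }
  assert (hc0 : 0 < (1 - y) ^ 2) by (apply pow_lt; lra).
  assert (hi1 : / (1 - y) ^ 2 <= 1 + 3 * y).
  { apply (Rmult_le_reg_l ((1 - y) ^ 2)); auto. rewrite Rinv_r by lra. simpl. nra. }
  assert (hi2 : / (1 - y) ^ 2 <= 2).
  { apply (Rmult_le_reg_l ((1 - y) ^ 2)); auto. rewrite Rinv_r by lra. simpl. nra. }
  set (ia := / Dl ^ 2). assert (hia : 0 < ia) by (apply Rinv_0_lt_compat; lra).
  set (c := / (1 - y) ^ 2) in *.
  assert (hc : 0 < c) by (apply Rinv_0_lt_compat; lra).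
  assert (hA : fexp (INR n) / (2 * Dp ^ 2) <= (1 + 3 * y) * Q + 3 / Dl ^ 2 * LL).
  { rewrite hf. unfold Rdiv. rewrite Rinv_mult. rewrite hinv. fold ia.
    replace (3 * / Dl ^ 2) with (3 * ia) by auto. unfold Q. unfold Rdiv. rewrite Rinv_mult. fold ia.
    assert (L * ia * (c - (1 + 3 * y)) <= 0) by (assert (0 <= L * ia) by nra; nra).
    assert (LL * ia * (c - 2) <= 0) by (assert (0 <= LL * ia) by (apply Rmult_le_pos; lra); assert (c - 2 <= 0) by lra; nra).
    nra. }
  assert (hetaL : eta * L = e' / 4 * Q) by (unfold eta, Q; field; lra).
  assert (hT : expect_nat P n (Npulls A a n) <= (1 + 3 * y) * Q + 3 / Dl ^ 2 * LL + e' / 4 * Q + K0).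
  { unfold K0. lra. }
  assert (hnpos : 0 < INR n) by lra.
  destruct (le_lt_dec n0 n) as [hnn|hnn].
  - assert (hLn : 8 * Dl ^ 2 * K0 / e' <= L).
    { rewrite <- (ln_exp (8 * Dl ^ 2 * K0 / e')). apply ln_le. apply exp_pos.
      assert (INR n0 <= INR n) by (apply le_INR; auto). lra. }
    assert (hK0Q : K0 <= e' / 4 * Q).
    { unfold Q. apply (Rmult_le_compat_r (e' / (8 * Dl ^ 2))) in hLn; [|left; apply Rdiv_lt_0_compat; lra].
      replace (8 * Dl ^ 2 * K0 / e' * (e' / (8 * Dl ^ 2))) with K0 in hLn by (field; lra).
      replace (e' / 4 * (L / (2 * Dl ^ 2))) with (L * (e' / (8 * Dl ^ 2))) by (field; lra). lra. }
    assert (0 <= (K0 * INR n0 + 1) / INR n).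
    { apply Rmult_le_pos. pose proof (pos_INR n0); nra. left; apply Rinv_0_lt_compat; lra. }
    assert (Q * e' <= Q * eps) by (apply Rmult_le_compat_l; lra).
    unfold y in hT. nra.
  - assert (hK : K0 <= (K0 * INR n0 + 1) / INR n).
    { assert (INR n <= INR n0) by (apply le_INR; lia).
      apply (Rmult_le_reg_r (INR n)); auto. unfold Rdiv. rewrite Rmult_assoc, Rinv_l by lra. nra. }
    assert (Q * e' <= Q * eps) by (apply Rmult_le_compat_l; lra).
    unfold y in hT. nra.
Qed.
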